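(* Assume (A1) and (A2). Then there exists a constant $c>0$ such that for all $\mathbf{z}\in\mathbb{W}(b^* )^2$ and $\boldsymbol\vartheta\in I_{2\pi}^2$, $$\left|(\Gamma(\mathbf{z})-\Gamma(\mathbf{z}+\boldsymbol\vartheta))\cdot\Big(\frac{\partial\Gamma}{\partial z_0}\times\frac{\partial\Gamma}{\partial z_1}\Big)(\mathbf{z}+\boldsymbol\vartheta)\right|\le c\,(\zeta(\boldsymbol\vartheta))^2.$$
   Context: $I_{2\pi}=[0,2\pi)$. Let $\Gamma=[\gamma_0,\gamma_1,\gamma_2]^T:\mathbb{R}^2\to\mathbb{R}^3$ have $2\pi$-biperiodic differentiable components, with $\Gamma|_{I_{2\pi}^2}$ parametrizing the boundary of a bounded open region in $\mathbb{R}^3$ that is $C^\infty$-diffeomorphic to a torus. For $\mathbf{a},\mathbf{b}\in\mathbb{C}^3$, $\mathbf{a}\cdot\mathbf{b}=\sum_ja_jb_j$ (no conjugation), $\mathbf{a}\times\mathbf{b}=[a_1b_2-a_2b_1,a_2b_0-a_0b_2,a_0b_1-a_1b_0]^T$, $\|\mathbf{a}\|_2=(\sum_j|a_j|^2)^{1/2}$; for matrices $\|\cdot\|_2$ is the induced operator norm. For $\boldsymbol\theta\in\mathbb{R}^2$, $\zeta(\boldsymbol\theta)=\sqrt{\mathrm{dist}(\theta_0,2\pi\mathbb{Z})^2+\mathrm{dist}(\theta_1,2\pi\mathbb{Z})^2}$ (for $\boldsymbol\theta\in I_{2\pi}^2$ this is $\sqrt{(\min\{\theta_0,2\pi-\theta_0\})^2+(\min\{\theta_1,2\pi-\theta_1\})^2}$).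 For $r>0$, $\mathbb{W}(r)=\{z\in\mathbb{C}:|\mathrm{Im}\,z|<r\}$. (A1): there is $C_0>0$ with $\|\Gamma(\boldsymbol\theta)-\Gamma(\boldsymbol\eta)\|_2\ge C_0\zeta(\boldsymbol\theta-\boldsymbol\eta)$ for all $\boldsymbol\theta,\boldsymbol\eta\in I_{2\pi}^2$. (A2): there is $R_0>0$ such that for each $j$ the ($2\pi$-biperiodic) function $\gamma_j$ extends analytically to the closure of $\mathbb{W}(R_0)^2\subset\mathbb{C}^2$ (extensions still denoted $\gamma_j$, $\Gamma$; $\frac{\partial\Gamma}{\partial z_\iota}=[\frac{\partial\gamma_0}{\partial z_\iota},\frac{\partial\gamma_1}{\partial z_\iota},\frac{\partial\gamma_2}{\partial z_\iota}]^T$ are complex partial derivatives). For $\mathbf{z}=[z_0,z_1]$, $\mathrm{Re}(\mathbf{z})=[\mathrm{Re}\,z_0,\mathrm{Re}\,z_1]$; $D\gamma_j$ is the complex gradient and $\mathbf{H}_j$ the $2\times2$ complex Hessian of $\gamma_j$. Let $M_{0,j}=\sup_{\mathbf{z}\in\mathbb{W}(R_0)^2}\|D\gamma_j(\mathbf{z})+D\gamma_j(\mathrm{Re}(\mathbf{z}))\|_2$, $M_{1,j}=\sup_{\mathbf{z}\in\mathbb{W}(R_0)^2}\|\mathbf{H}_j(\mathbf{z})\|_2$, $M_0=(\sum_jM_{0,j}^2)^{1/2}$, $M_1=(\sum_jM_{1,j}^2)^{1/2}$. Fix $b$ with $0<b<\min\{\frac{C_0^2}{\sqrt2M_0M_1},\frac{R_0}{2}\}$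 and let $b^*=\frac12\big(b+\min\{\frac{C_0^2}{\sqrt2M_0M_1},\frac{R_0}{2}\}\big)$. *)

(* Defs.v *)
From Stdlib Require Import Reals ZArith ClassicalEpsilon.
From Coquelicot Require Import Coquelicot.

Open Scope R_scope.

Definition cadd2 (z w : C * C) : C * C := (Cplus (fst z) (fst w), Cplus (snd z) (snd w)).
Definition rpt (t s : R) : C * C := (RtoC t, RtoC s).
Definition ReZ (z : C * C) : C * C := (RtoC (Re (fst z)), RtoC (Re (snd z))).

Definition inW (r : R) (z : C * C) : Prop :=
  Rabs (Im (fst z)) < r /\ Rabs (Im (snd z)) < r.
Definition inWcl (r : R) (z : C * C) : Prop :=
  Rabs (Im (fst z)) <= r /\ Rabs (Im (snd z)) <= r.

(** f : C^2 -> C is analytic (= holomorphic, i.e. complex-Frechet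
    differentiable) on an open set containing S. *)
Definition analytic_near (S : C * C -> Prop) (f : C * C -> C) : Prop :=
  exists U : C * C -> Prop, open U /\ (forall z, S z -> U z) /\
    forall z, U z -> ex_filterdiff (K := C_AbsRing) f (locally z).

Definition pd0 (f : C * C -> C) (z : C * C) : C :=
  epsilon (inhabits (RtoC 0)) (fun l : C =>
    is_derive (K := C_AbsRing) (V := C_NormedModule) (fun w : C => f (w, snd z)) (fst z) l).
Definition pd1 (f : C * C -> C) (z : C * C) : C :=
  epsilon (inhabits (RtoC 0)) (fun l : C =>
    is_derive (K := C_AbsRing) (V := C_NormedModule) (fun w : C => f (fst z, w)) (snd z) l).

Definition vnorm2 (a b : C) : R := sqrt (Cmod a ^ 2 + Cmod b ^ 2).
Definition vnorm3 (a : C * C * C) : R :=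
  let '(a0, a1, a2) := a in sqrt (Cmod a0 ^ 2 + Cmod a1 ^ 2 + Cmod a2 ^ 2).

Definition opnorm22 (a b c d : C) : R :=
  real (Lub_Rbar (fun r => exists v0 v1 : C, vnorm2 v0 v1 = 1 /\
          r = vnorm2 (Cplus (Cmult a v0) (Cmult b v1)) (Cplus (Cmult c v0) (Cmult d v1)))).

Definition grad_norm_sum (f : C * C -> C) (z : C * C) : R :=
  vnorm2 (Cplus (pd0 f z) (pd0 f (ReZ z))) (Cplus (pd1 f z) (pd1 f (ReZ z))).
Definition hess_norm (f : C * C -> C) (z : C * C) : R :=
  opnorm22 (pd0 (pd0 f) z) (pd1 (pd0 f) z) (pd0 (pd1 f) z) (pd1 (pd1 f) z).

Definition M0j (R0 : R) (f : C * C -> C) : R :=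
  real (Lub_Rbar (fun r => exists z, inW R0 z /\ r = grad_norm_sum f z)).
Definition M1j (R0 : R) (f : C * C -> C) : R :=
  real (Lub_Rbar (fun r => exists z, inW R0 z /\ r = hess_norm f z)).
Definition M0 (R0 : R) (g0 g1 g2 : C * C -> C) : R :=
  sqrt (M0j R0 g0 ^ 2 + M0j R0 g1 ^ 2 + M0j R0 g2 ^ 2).
Definition M1 (R0 : R) (g0 g1 g2 : C * C -> C) : R :=
  sqrt (M1j R0 g0 ^ 2 + M1j R0 g1 ^ 2 + M1j R0 g2 ^ 2).

Definition bmax (C0 R0 : R) (g0 g1 g2 : C * C -> C) : R :=
  Rmin (C0 ^ 2 / (sqrt 2 * M0 R0 g0 g1 g2 * M1 R0 g0 g1 g2)) (R0 / 2).
Definition bstar (b C0 R0 : R) (g0 g1 g2 : C * C -> C) : R :=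
  (b + bmax C0 R0 g0 g1 g2) / 2.

Definition dist2piZ (t : R) : R :=
  real (Glb_Rbar (fun d => exists k : Z, d = Rabs (t - 2 * PI * IZR k))).
Definition zeta (t s : R) : R := sqrt (dist2piZ t ^ 2 + dist2piZ s ^ 2).

(** bilinear dot product (no conjugation) and cross product on C^3 *)
Definition cdot3 (a b : C * C * C) : C :=
  let '(a0, a1, a2) := a in let '(b0, b1, b2) := b in
  Cplus (Cplus (Cmult a0 b0) (Cmult a1 b1)) (Cmult a2 b2).
Definition ccross3 (a b : C * C * C) : C * C * C :=
  let '(a0, a1, a2) := a in let '(b0, b1, b2) := b in
  (Cminus (Cmult a1 b2) (Cmult a2 b1),
   Cminus (Cmult a2 b0) (Cmult a0 b2),
   Cminus (Cmult a0 b1) (Cmult a1 b0)).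
Definition csub3 (a b : C * C * C) : C * C * C :=
  let '(a0, a1, a2) := a in let '(b0, b1, b2) := b in
  (Cminus a0 b0, Cminus a1 b1, Cminus a2 b2).

Definition Gam (g0 g1 g2 : C * C -> C) (z : C * C) : C * C * C := (g0 z, g1 z, g2 z).
Definition dGam0 (g0 g1 g2 : C * C -> C) (z : C * C) : C * C * C :=
  (pd0 g0 z, pd0 g1 z, pd0 g2 z).
Definition dGam1 (g0 g1 g2 : C * C -> C) (z : C * C) : C * C * C :=
  (pd1 g0 z, pd1 g1 z, pd1 g2 z).

Definition rdist3 (gr0 gr1 gr2 : R -> R -> R) (t s t' s' : R) : R :=
  sqrt ((gr0 t s - gr0 t' s') ^ 2 + (gr1 t s - gr1 t' s') ^ 2 + (gr2 t s - gr2 t' s') ^ 2).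

Definition biperiodic (f : R -> R -> R) : Prop :=
  forall t s, f (t + 2 * PI) s = f t s /\ f t (s + 2 * PI) = f t s.

Definition inI (t : R) : Prop := 0 <= t < 2 * PI.

Definition ext_of (R0 : R) (gr : R -> R -> R) (g : C * C -> C) : Prop :=
  analytic_near (inWcl R0) g /\
  (forall t s, g (rpt t s) = RtoC (gr t s)) /\
  (forall z, inWcl R0 z ->
     g (cadd2 z (rpt (2 * PI) 0)) = g z /\ g (cadd2 z (rpt 0 (2 * PI))) = g z).

(* Main.v *)
Require Import Defs.
From Stdlib Require Import Reals Lra Lia ZArith ClassicalEpsilon Classical.
From Coquelicot Require Import Coquelicot.
Open Scope R_scope.

Definition isCI (f : R -> C) a b (l : C) := @is_RInt C_R_NormedModule f a b l.

Lemma Ceq2 (x y : C) : fst x = fst y -> snd x = snd y -> x = y.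
Proof. destruct x, y; simpl; intros; subst; reflexivity. Qed.

Ltac ceq := apply Ceq2; unfold Cminus, Cplus, Cmult, Copp, RtoC, Ci; simpl; ring.

Lemma isCI_ext f g a b l : (forall x, Rmin a b <= x <= Rmax a b -> f x = g x) -> isCI f a b l -> isCI g a b l.
Proof. intros H H'. apply (is_RInt_ext f); auto. intros; apply H; lra. Qed.

Lemma isCI_plus f g a b l1 l2 : isCI f a b l1 -> isCI g a b l2 -> isCI (fun t => (f t + g t)%C) a b (l1 + l2)%C.
Proof. intros H1 H2. exact (is_RInt_plus (V:=C_R_NormedModule) f g a b l1 l2 H1 H2). Qed.

Lemma isCI_opp f a b l : isCI f a b l -> isCI (fun t => (- f t)%C) a b (- l)%C.
Proof. intros H. exact (is_RInt_opp (V:=C_R_NormedModule) f a b l H). Qed.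

Lemma isCI_minus f g a b l1 l2 : isCI f a b l1 -> isCI g a b l2 -> isCI (fun t => (f t - g t)%C) a b (l1 - l2)%C.
Proof. intros H1 H2. apply isCI_plus; auto. apply isCI_opp; auto. Qed.

Lemma isCI_rscal f a b (k : R) l : isCI f a b l -> isCI (fun t => (RtoC k * f t)%C) a b (RtoC k * l)%C.
Proof. intros H. 
  apply isCI_ext with (f := fun t => @scal _ C_R_NormedModule k (f t)).
  intros; rewrite scal_R_Cmult; reflexivity.
  rewrite <- scal_R_Cmult. exact (is_RInt_scal (V:=C_R_NormedModule) f a b k l H). Qed.

Lemma isCI_fst f a b l : isCI f a b l -> is_RInt (fun t => fst (f t)) a b (fst l).
Proof. intros H. exact (is_RInt_fct_extend_fst (U:=R_NormedModule) (V:=R_NormedModule) f a b l H). Qed.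
Lemma isCI_snd f a b l : isCI f a b l -> is_RInt (fun t => snd (f t)) a b (snd l).
Proof. intros H. exact (is_RInt_fct_extend_snd (U:=R_NormedModule) (V:=R_NormedModule) f a b l H). Qed.
Lemma isCI_pair f a b l : is_RInt (fun t => fst (f t)) a b (fst l) -> is_RInt (fun t => snd (f t)) a b (snd l) -> isCI f a b l.
Proof. intros H1 H2. destruct l as [l1 l2].
  exact (is_RInt_fct_extend_pair (U:=R_NormedModule) (V:=R_NormedModule) f a b l1 l2 H1 H2). Qed.

Lemma isCI_mult_l f a b c l : isCI f a b l -> isCI (fun t => (c * f t)%C) a b (c * l)%C.
Proof. intros H. apply isCI_pair.
  - simpl. apply (is_RInt_ext (fun t => fst c * fst (f t) - snd c * snd (f t))).
    intros; reflexivity.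
    apply (is_RInt_minus (V:=R_NormedModule)).
    apply (is_RInt_scal (V:=R_NormedModule)). apply isCI_fst; auto.
    apply (is_RInt_scal (V:=R_NormedModule)). apply isCI_snd; auto.
  - simpl. apply (is_RInt_ext (fun t => fst c * snd (f t) + snd c * fst (f t))).
    intros; reflexivity.
    apply (is_RInt_plus (V:=R_NormedModule)).
    apply (is_RInt_scal (V:=R_NormedModule)). apply isCI_snd; auto.
    apply (is_RInt_scal (V:=R_NormedModule)). apply isCI_fst; auto.
Qed.

Lemma isCI_mult_r f a b c l : isCI f a b l -> isCI (fun t => (f t * c)%C) a b (l * c)%C.
Proof. intros H. apply isCI_ext with (f := fun t => (c * f t)%C).
  intros; apply Cmult_comm. rewrite Cmult_comm. apply isCI_mult_l; auto. Qed.

Lemma isCI_const a b (c : C) : isCI (fun _ => c) a b (RtoC (b - a) * c)%C.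
Proof. rewrite <- scal_R_Cmult. exact (is_RInt_const (V:=C_R_NormedModule) a b c). Qed.

Lemma isCI_unique f a b l1 l2 : isCI f a b l1 -> isCI f a b l2 -> l1 = l2.
Proof. intros H1 H2.
  rewrite <- (is_RInt_unique (V:=C_R_CompleteNormedModule) f a b l1 H1).
  rewrite <- (is_RInt_unique (V:=C_R_CompleteNormedModule) f a b l2 H2). reflexivity. Qed.

Lemma normCR (x : C) : @norm _ C_R_NormedModule x = Cmod x.
Proof. destruct x as [x y]. unfold Cmod. simpl fst; simpl snd.
  change (sqrt (@norm _ R_NormedModule x ^ 2 + @norm _ R_NormedModule y ^ 2) = sqrt (x^2+y^2)).
  unfold norm; simpl; unfold abs; simpl. rewrite !Rmult_1_r, <- !Rabs_mult, !Rabs_right; try reflexivity; apply Rle_ge; apply Rle_0_sqr. Qed.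

Lemma isCI_norm f a b l B : a <= b -> (forall t, a <= t <= b -> Cmod (f t) <= B) -> isCI f a b l -> Cmod l <= B * (b - a).
Proof. intros Hab HB H.
  assert (Hc := is_RInt_const (V:=R_NormedModule) a b B).
  assert (HB' : forall t, a <= t <= b -> @norm _ C_R_NormedModule (f t) <= B).
  { intros; rewrite normCR; auto. }
  pose proof (norm_RInt_le (V:=C_R_NormedModule) f (fun _ => B) a b l _ Hab HB' H Hc) as K.
  rewrite normCR in K.
  simpl in K. unfold scal in K; simpl in K. unfold mult in K; simpl in K.
  lra. Qed.

Lemma isCI_Chasles f a b c l1 l2 : isCI f a b l1 -> isCI f b c l2 -> isCI f a c (l1 + l2)%C.
Proof. intros H1 H2. exact (is_RInt_Chasles (V:=C_R_NormedModule) f a b c l1 l2 H1 H2). Qed.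

Lemma isCI_swap f a b l : isCI f b a l -> isCI f a b (- l)%C.
Proof. intros H. exact (is_RInt_swap (V:=C_R_NormedModule) f a b l H). Qed.

Lemma isCI_point f a : isCI f a a 0%C.
Proof. exact (is_RInt_point (V:=C_R_NormedModule) f a). Qed.

Lemma isCI_comp_lin f u v a b l : isCI f (u * a + v) (u * b + v) l ->
  isCI (fun y => (RtoC u * f (u * y + v)%R)%C) a b l.
Proof. intros H. apply isCI_ext with (f := fun y => @scal _ C_R_NormedModule u (f (u * y + v))).
  intros; rewrite scal_R_Cmult; reflexivity.
  exact (is_RInt_comp_lin (V:=C_R_NormedModule) f u v a b l H). Qed.

Definition Ccont (f : R -> C) (t : R) := @continuous R_UniformSpace C_UniformSpace f t.

Lemma isCI_cont f a b : (forall t, Rmin a b <= t <= Rmax a b -> Ccont f t) -> isCI f a b (RInt (V:=C_R_CompleteNormedModule) f a b).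
Proof. intros H. apply (RInt_correct (V:=C_R_CompleteNormedModule)).
  apply (ex_RInt_continuous (V:=C_R_CompleteNormedModule)). exact H. Qed.

Lemma Cmod_fst_le (x : C) : Rabs (fst x) <= Cmod x.
Proof. pose proof (Rmax_Cmod x). pose proof (Rmax_l (Rabs (fst x)) (Rabs (snd x))). lra. Qed.
Lemma Cmod_snd_le (x : C) : Rabs (snd x) <= Cmod x.
Proof. pose proof (Rmax_Cmod x). pose proof (Rmax_r (Rabs (fst x)) (Rabs (snd x))). lra. Qed.

Lemma Cmod_le_sum (x : C) : Cmod x <= Rabs (fst x) + Rabs (snd x).
Proof. destruct x as [a b]. unfold Cmod; simpl.
  apply Rsqr_incr_0_var. 2: pose proof (Rabs_pos a); pose proof (Rabs_pos b); lra.
  rewrite Rsqr_sqrt. 2: nra. unfold Rsqr.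
  assert (a * (a * 1) + b * (b * 1) = Rabs a * Rabs a + Rabs b * Rabs b) as ->.
  { rewrite <- !Rabs_mult. rewrite !Rabs_right; try (apply Rle_ge, Rle_0_sqr). ring. }
  pose proof (Rabs_pos a); pose proof (Rabs_pos b). nra. Qed.

Lemma loc_C_intro (z : C) (P : C -> Prop) :
  (exists d, 0 < d /\ forall w, Cmod (w - z) < d -> P w) -> @locally C_UniformSpace z P.
Proof. intros [d [Hd H]]. exists (mkposreal (d/2) ltac:(lra)). intros w [H1 H2].
  apply H. change (Rabs (fst w + - fst z) < d/2) in H1. change (Rabs (snd w + - snd z) < d/2) in H2.
  pose proof (Cmod_le_sum (w - z)%C). simpl in H0. lra. Qed.

Lemma loc_C_elim (z : C) (P : C -> Prop) :
  @locally C_UniformSpace z P -> exists d, 0 < d /\ forall w, Cmod (w - z) < d -> P w.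
Proof. intros [d H]. exists d. split. apply cond_pos. intros w Hw. apply H. split.
  - change (Rabs (fst w + - fst z) < d).
    pose proof (Cmod_fst_le (w - z)%C). simpl in H0. lra.
  - change (Rabs (snd w + - snd z) < d).
    pose proof (Cmod_snd_le (w - z)%C). simpl in H0. lra. Qed.


Lemma locA_intro (z : C) (P : C -> Prop) :
  (exists d, 0 < d /\ forall w, Cmod (w - z) < d -> P w) -> @locally (AbsRing_UniformSpace C_AbsRing) z P.
Proof. intros [d [Hd H]]. exists (mkposreal d Hd). intros w Hw. apply H. exact Hw. Qed.

Lemma locA_elim (z : C) (P : C -> Prop) :
  @locally (AbsRing_UniformSpace C_AbsRing) z P -> exists d, 0 < d /\ forall w, Cmod (w - z) < d -> P w.
Proof. intros [d H]. exists d. split. apply cond_pos. intros w Hw. apply H. exact Hw. Qed.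

Definition CD (f : C -> C) (z l : C) := @is_derive C_AbsRing C_NormedModule f z l.

Lemma CD_eps f z l : CD f z l -> forall eps, 0 < eps -> exists d, 0 < d /\
  forall w, Cmod (w - z) < d -> Cmod (f w - f z - l * (w - z)) <= eps * Cmod (w - z).
Proof. intros [_ H] eps He.
  assert (Hl : is_filter_lim (locally (T:=AbsRing_UniformSpace C_AbsRing) z) z) by (intros P HP; exact HP).
  specialize (H z Hl (mkposreal eps He)).
  apply locA_elim in H. destruct H as [d [Hd H]]. exists d; split; auto.
  intros w Hw. specialize (H w Hw). simpl in H.
  replace (f w - f z - l * (w - z))%C with (minus (minus (f w) (f z)) (scal (minus w z) l)).
  exact H. unfold minus, plus, opp, scal; simpl. unfold mult; simpl. ceq. Qed.

Lemma CD_intro f z l : (forall eps, 0 < eps -> exists d, 0 < d /\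
  forall w, Cmod (w - z) < d -> Cmod (f w - f z - l * (w - z)) <= eps * Cmod (w - z)) -> CD f z l.
Proof. intros H. split.
  - apply is_linear_scal_l.
  - intros x Hx. 
    assert (x = z). { symmetry. apply (is_filter_lim_locally_unique (K:=C_AbsRing) (V:=AbsRing_NormedModule C_AbsRing)); exact Hx. }
    subst x. intros [eps He]. apply locA_intro. destruct (H eps He) as [d [Hd H']].
    exists d; split; auto. intros w Hw. specialize (H' w Hw).
    assert (E : (f w - f z - l * (w - z))%C = minus (minus (f w) (f z)) (scal (minus w z) l)).
    { unfold minus, plus, opp, scal; simpl. unfold mult; simpl. ceq. }
    rewrite E in H'. exact H'. Qed.

Definition Cc (f : C -> C) z := forall eps, 0 < eps -> exists d, 0 < d /\ forall w, Cmod (w - z) < d -> Cmod (f w - f z) < eps.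

Lemma CD_Cc f z l : CD f z l -> Cc f z.
Proof. intros H eps He. destruct (CD_eps f z l H 1 ltac:(lra)) as [d [Hd H']].
  exists (Rmin d (eps / (Cmod l + 2))). split.
  apply Rmin_glb_lt; auto. apply Rdiv_lt_0_compat; auto. pose proof (Cmod_ge_0 l); lra.
  intros w Hw. specialize (H' w ltac:(pose proof (Rmin_l d (eps / (Cmod l + 2))); lra)).
  replace (f w - f z)%C with ((f w - f z - l * (w - z)) + l * (w - z))%C by ceq.
  eapply Rle_lt_trans. apply Cmod_triangle. rewrite Cmod_mult.
  pose proof (Rmin_r d (eps / (Cmod l + 2))). pose proof (Cmod_ge_0 l). pose proof (Cmod_ge_0 (w - z)%C).
  assert (Cmod (w - z) * (Cmod l + 2) < eps).
  { apply Rlt_le_trans with (eps / (Cmod l + 2) * (Cmod l + 2)). apply Rmult_lt_compat_r; lra. right; field; lra. }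
  nra. Qed.

Lemma CD_unique f z l1 l2 : CD f z l1 -> CD f z l2 -> l1 = l2.
Proof. intros H1 H2. rewrite <- (is_C_derive_unique f z l1 H1). apply is_C_derive_unique; auto. Qed.

Definition RCc (g : R -> C) t := forall eps, 0 < eps -> exists d, 0 < d /\ forall s, Rabs (s - t) < d -> Cmod (g s - g t) < eps.

Lemma RCc_Ccont (g : R -> C) t : RCc g t -> Ccont g t.
Proof. intros H P HP. apply loc_C_elim in HP. destruct HP as [e [He HP]].
  destruct (H e He) as [d [Hd H']]. exists (mkposreal d Hd). intros s Hs. apply HP. apply H'. exact Hs. Qed.

Lemma RCc_comp (g : R -> C) (f : C -> C) t : RCc g t -> Cc f (g t) -> RCc (fun s => f (g s)) t.
Proof. intros H1 H2 eps He. destruct (H2 eps He) as [d1 [Hd1 H2']]. destruct (H1 d1 Hd1) as [d [Hd H1']].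
  exists d; split; auto. Qed.

Lemma RCc_affine (u d : C) t : RCc (fun s => (u + RtoC s * d)%C) t.
Proof. intros eps He. exists (eps / (Cmod d + 1)). split.
  apply Rdiv_lt_0_compat; auto. pose proof (Cmod_ge_0 d); lra.
  intros s Hs. replace (u + RtoC s * d - (u + RtoC t * d))%C with (RtoC (s - t) * d)%C by ceq.
  rewrite Cmod_mult, Cmod_R. pose proof (Cmod_ge_0 d). pose proof (Rabs_pos (s - t)).
  apply Rle_lt_trans with (Rabs (s - t) * (Cmod d + 1)). nra.
  apply Rlt_le_trans with (eps / (Cmod d + 1) * (Cmod d + 1)). apply Rmult_lt_compat_r; lra.
  right; field; lra. Qed.

Lemma Cc_mult_const (f : C -> C) c z : Cc f z -> Cc (fun w => (f w * c)%C) z.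
Proof. intros H eps He. destruct (H (eps / (Cmod c + 1))) as [d [Hd H']].
  apply Rdiv_lt_0_compat; auto. pose proof (Cmod_ge_0 c); lra.
  exists d; split; auto. intros w Hw. specialize (H' w Hw).
  replace (f w * c - f z * c)%C with ((f w - f z) * c)%C by ceq. rewrite Cmod_mult.
  pose proof (Cmod_ge_0 c). pose proof (Cmod_ge_0 (f w - f z)%C).
  apply Rle_lt_trans with (Cmod (f w - f z) * (Cmod c + 1)). nra.
  apply Rlt_le_trans with (eps / (Cmod c + 1) * (Cmod c + 1)). apply Rmult_lt_compat_r; lra.
  right; field; lra. Qed.

Definition segf (psi : C -> C) (u v : C) (t : R) : C := (psi (u + RtoC t * (v - u)) * (v - u))%C.
Definition SI (psi : C -> C) (u v : C) : C := RInt (V:=C_R_CompleteNormedModule) (segf psi u v) 0 1.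
Definition lg (psi : C -> C) (p d : C) (x : R) : C := (psi (p + RtoC x * d) * d)%C.

Lemma RCc_lg psi p d x : Cc psi (p + RtoC x * d)%C -> RCc (lg psi p d) x.
Proof. intros H. unfold lg. apply (RCc_comp (fun s => (p + RtoC s * d)%C) (fun w => (psi w * d)%C)).
  apply RCc_affine. apply Cc_mult_const. exact H. Qed.

Lemma isCI_lg psi p d a b : (forall x, Rmin a b <= x <= Rmax a b -> Cc psi (p + RtoC x * d)%C) ->
  isCI (lg psi p d) a b (RInt (V:=C_R_CompleteNormedModule) (lg psi p d) a b).
Proof. intros H. apply isCI_cont. intros t Ht. apply RCc_Ccont. apply RCc_lg. auto. Qed.

Lemma SI_line psi p d u v a b : u = (p + RtoC a * d)%C -> v = (p + RtoC b * d)%C ->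
  (forall x, Rmin a b <= x <= Rmax a b -> Cc psi (p + RtoC x * d)%C) ->
  isCI (segf psi u v) 0 1 (RInt (V:=C_R_CompleteNormedModule) (lg psi p d) a b) /\
  SI psi u v = RInt (V:=C_R_CompleteNormedModule) (lg psi p d) a b.
Proof. intros -> -> H.
  assert (K : isCI (segf psi (p + RtoC a * d) (p + RtoC b * d)) 0 1 (RInt (V:=C_R_CompleteNormedModule) (lg psi p d) a b)).
  { pose proof (isCI_lg psi p d a b H) as K.
    assert (K' : isCI (lg psi p d) ((b - a) * 0 + a) ((b - a) * 1 + a) (RInt (V:=C_R_CompleteNormedModule) (lg psi p d) a b)).
    { replace ((b - a) * 0 + a) with a by ring. replace ((b - a) * 1 + a) with b by ring. exact K. }
    pose proof (isCI_comp_lin _ _ _ _ _ _ K') as K2.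
    eapply isCI_ext. 2: exact K2. intros y _. unfold lg, segf.
    assert (E : (p + RtoC a * d + RtoC y * (p + RtoC b * d - (p + RtoC a * d)))%C = (p + RtoC ((b - a) * y + a) * d)%C) by ceq.
    rewrite E. ceq. }
  split; auto. unfold SI. apply (is_RInt_unique (V:=C_R_CompleteNormedModule)). exact K. Qed.

Definition segCc psi u v := forall t, 0 <= t <= 1 -> Cc psi (u + RtoC t * (v - u))%C.

Lemma SI_correct psi u v : segCc psi u v -> isCI (segf psi u v) 0 1 (SI psi u v).
Proof. intros H. destruct (SI_line psi u (v - u) u v 0 1) as [K1 K2].
  ceq. ceq. intros x Hx. apply H. rewrite Rmin_left, Rmax_right in Hx; lra.
  rewrite K2. exact K1. Qed.

Lemma SI_rev psi u v : segCc psi u v -> SI psi v u = (- SI psi u v)%C.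
Proof. intros H.
  assert (Hc : forall x, Rmin 0 1 <= x <= Rmax 0 1 -> Cc psi (u + RtoC x * (v - u))%C).
  { intros x Hx. apply H. rewrite Rmin_left, Rmax_right in Hx; lra. }
  assert (Hc' : forall x, Rmin 1 0 <= x <= Rmax 1 0 -> Cc psi (u + RtoC x * (v - u))%C).
  { intros x Hx. apply H. rewrite Rmin_right, Rmax_left in Hx; lra. }
  destruct (SI_line psi u (v - u) u v 0 1) as [_ K2]; [ceq|ceq|auto|].
  destruct (SI_line psi u (v - u) v u 1 0) as [_ K3]; [ceq|ceq|auto|].
  rewrite K2, K3. pose proof (isCI_lg _ _ _ _ _ Hc) as I1. pose proof (isCI_lg _ _ _ _ _ Hc') as I2.
  apply isCI_swap in I1. eapply isCI_unique; eauto. Qed.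

Lemma SI_collinear psi p d u v w a b c :
  u = (p + RtoC a * d)%C -> v = (p + RtoC b * d)%C -> w = (p + RtoC c * d)%C ->
  (forall x, Rmin a (Rmin b c) <= x <= Rmax a (Rmax b c) -> Cc psi (p + RtoC x * d)%C) ->
  (SI psi u v + SI psi v w + SI psi w u = 0)%C.
Proof. intros Hu Hv Hw H.
  assert (H1 : forall x y, (x = a \/ x = b \/ x = c) -> (y = a \/ y = b \/ y = c) ->
     forall z, Rmin x y <= z <= Rmax x y -> Cc psi (p + RtoC z * d)%C).
  { intros x y Hx Hy z Hz. apply H.
    assert (Rmin a (Rmin b c) <= Rmin x y /\ Rmax x y <= Rmax a (Rmax b c)).
    { destruct Hx as [ Hx | [ Hx | Hx ] ]; destruct Hy as [ Hy | [ Hy | Hy ] ]; subst x y;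
      unfold Rmin, Rmax; repeat destruct Rle_dec; lra. }
    lra. }
  destruct (SI_line psi p d u v a b Hu Hv) as [_ E1]. { apply H1; auto. }
  destruct (SI_line psi p d v w b c Hv Hw) as [_ E2]. { apply H1; auto. }
  destruct (SI_line psi p d w u c a Hw Hu) as [_ E3]. { apply H1; auto. }
  rewrite E1, E2, E3.
  pose proof (isCI_lg psi p d a b (H1 a b ltac:(auto) ltac:(auto))) as I1.
  pose proof (isCI_lg psi p d b c (H1 b c ltac:(auto) ltac:(auto))) as I2.
  pose proof (isCI_lg psi p d c a (H1 c a ltac:(auto) ltac:(auto))) as I3.
  pose proof (isCI_Chasles _ _ _ _ _ _ I1 I2) as I12. apply isCI_swap in I3.
  pose proof (isCI_unique _ _ _ _ _ I12 I3) as E.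
  set (X := RInt _ a b) in *. set (Y := RInt _ b c) in *. set (Z := RInt _ c a) in *.
  rewrite E. ceq. Qed.

Lemma SI_split psi u v s : 0 <= s <= 1 -> segCc psi u v ->
  SI psi u v = (SI psi u (u + RtoC s * (v - u)) + SI psi (u + RtoC s * (v - u)) v)%C.
Proof. intros Hs H.
  pose proof (SI_collinear psi u (v - u) u (u + RtoC s * (v - u))%C v 0 s 1) as K.
  rewrite (SI_rev psi u v H) in K.
  assert (E: (SI psi u (u + RtoC s * (v - u)) + SI psi (u + RtoC s * (v - u)) v + - SI psi u v = 0)%C).
  { apply K; try ceq. intros x Hx. apply H. unfold Rmin, Rmax in Hx. repeat destruct Rle_dec in Hx; lra. }
  set (X := SI psi u (u + RtoC s * (v - u))) in *. set (Y := SI psi (u + RtoC s * (v - u)) v) in *.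
  set (Z := SI psi u v) in *.
  replace Z with (Z + (X + Y + - Z))%C by (rewrite E; ceq). ceq. Qed.

Lemma SI_bound psi u v B : segCc psi u v -> (forall t, 0 <= t <= 1 -> Cmod (psi (u + RtoC t * (v - u))%C) <= B) ->
  Cmod (SI psi u v) <= B * Cmod (v - u).
Proof. intros H HB. pose proof (SI_correct psi u v H) as K.
  pose proof (isCI_norm (segf psi u v) 0 1 (SI psi u v) (B * Cmod (v - u)) ltac:(lra)) as N.
  replace (B * Cmod (v - u)) with (B * Cmod (v - u) * (1 - 0)) by ring. apply N; auto.
  intros t Ht. unfold segf. rewrite Cmod_mult. apply Rmult_le_compat_r. apply Cmod_ge_0. auto. Qed.

Lemma SI_minus psi1 psi2 u v : segCc psi1 u v -> segCc psi2 u v ->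
  SI (fun z => psi1 z - psi2 z)%C u v = (SI psi1 u v - SI psi2 u v)%C.
Proof. intros H1 H2. pose proof (isCI_minus _ _ _ _ _ _ (SI_correct _ _ _ H1) (SI_correct _ _ _ H2)) as K.
  unfold SI at 1. apply (is_RInt_unique (V:=C_R_CompleteNormedModule)).
  eapply isCI_ext. 2: exact K. intros; unfold segf; ceq. Qed.

Lemma SI_lin (A B u v : C) : SI (fun z => A + B * z)%C u v = ((A + B * u) * (v - u) + B * (v - u) * (v - u) * RtoC (/2))%C.
Proof. set (c1 := ((A + B * u) * (v - u))%C). set (c2 := (B * (v - u) * (v - u))%C).
  assert (D : forall x, is_derive (K:=R_AbsRing) (V:=C_R_NormedModule) (fun t => (RtoC t * c1 + RtoC (t * t / 2) * c2)%C) x (c1 + RtoC x * c2)%C).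
  { intros x. 
    assert (D1 := is_derive_scal_l (K:=R_AbsRing) (V:=C_R_NormedModule) (fun t => t) x 1 c1 (is_derive_id x)).
    assert (Dq : is_derive (fun t : R => t * t / 2) x x).
    { auto_derive. auto. field. }
    assert (D2 := is_derive_scal_l (K:=R_AbsRing) (V:=C_R_NormedModule) (fun t => t * t / 2) x x c2 Dq).
    pose proof (is_derive_plus (K:=R_AbsRing) (V:=C_R_NormedModule) _ _ x _ _ D1 D2) as D3.
    replace (c1 + RtoC x * c2)%C with (@plus C_R_NormedModule (scal 1 c1) (scal x c2)).
    2: { rewrite !scal_R_Cmult. change (Cplus (RtoC 1 * c1) (RtoC x * c2) = (c1 + RtoC x * c2)%C). ceq. }
    eapply is_derive_ext. 2: exact D3. intros t; simpl. rewrite !scal_R_Cmult. reflexivity. }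
  pose proof (is_RInt_derive (V:=C_R_CompleteNormedModule) _ (fun t => (c1 + RtoC t * c2)%C) 0 1 (fun x _ => D x)
     (fun x _ => RCc_Ccont _ x (RCc_affine c1 c2 x))) as K.
  assert (K2 : isCI (segf (fun z => (A + B * z)%C) u v) 0 1 (minus ((fun t : R_AbsRing => (t * c1 + (t * t / 2)%R * c2)%C) 1)
       ((fun t : R_AbsRing => (t * c1 + (t * t / 2)%R * c2)%C) 0))).
  { eapply isCI_ext. 2: exact K. intros t _. unfold segf, c1, c2. ceq. }
  unfold SI. rewrite (is_RInt_unique (V:=C_R_CompleteNormedModule) _ 0 1 _ K2).
  change (Cplus (RtoC 1 * c1 + RtoC (1 * 1 / 2) * c2) (Copp (RtoC 0 * c1 + RtoC (0 * 0 / 2) * c2)) =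
      ((A + B * u) * (v - u) + B * (v - u) * (v - u) * RtoC (/ 2))%C).
    unfold c1, c2. apply Ceq2; unfold Cminus, Cplus, Cmult, Copp, RtoC; simpl; field.
Qed.

Definition pt := (R * R)%type.
Definition P (u v w : C) (c : pt) : C := (RtoC (fst c) * u + RtoC (snd c) * v + RtoC (1 - fst c - snd c) * w)%C.
Definition inS (c : pt) := 0 <= fst c /\ 0 <= snd c /\ fst c + snd c <= 1.
Definition mid (a b : pt) : pt := ((fst a + fst b) / 2, (snd a + snd b) / 2).
Definition comb (a b : pt) (t : R) : pt := (fst a + t * (fst b - fst a), snd a + t * (snd b - snd a)).
Definition d1 (a b : pt) := Rabs (fst a - fst b) + Rabs (snd a - snd b).
Definition Tri psi a b c := (SI psi a b + SI psi b c + SI psi c a)%C.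

Lemma inS_comb a b t : inS a -> inS b -> 0 <= t <= 1 -> inS (comb a b t).
Proof. unfold inS, comb; simpl. intros [? [? ?]] [? [? ?]] ?. nra. Qed.
Lemma inS_mid a b : inS a -> inS b -> inS (mid a b).
Proof. unfold inS, mid; simpl. intros; lra. Qed.
Lemma P_comb u v w a b t : P u v w (comb a b t) = (P u v w a + RtoC t * (P u v w b - P u v w a))%C.
Proof. unfold P, comb. destruct a, b; simpl. ceq. Qed.
Lemma P_mid u v w a b : P u v w (mid a b) = (P u v w a + RtoC (/2) * (P u v w b - P u v w a))%C.
Proof. unfold P, mid. destruct a, b; simpl. apply Ceq2; unfold Cminus, Cplus, Cmult, Copp, RtoC; simpl; field. Qed.

Lemma d1_mid a b c e : d1 (mid a b) (mid c e) <= (d1 a c + d1 b e) / 2.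
Proof. unfold d1, mid; simpl.
  replace ((fst a + fst b) / 2 - (fst c + fst e) / 2) with ((fst a - fst c) / 2 + (fst b - fst e) / 2) by field.
  replace ((snd a + snd b) / 2 - (snd c + snd e) / 2) with ((snd a - snd c) / 2 + (snd b - snd e) / 2) by field.
  pose proof (Rabs_triang ((fst a - fst c) / 2) ((fst b - fst e) / 2)).
  pose proof (Rabs_triang ((snd a - snd c) / 2) ((snd b - snd e) / 2)).
  unfold Rdiv in *. rewrite !Rabs_mult in *. rewrite (Rabs_right (/2)) in * by lra. lra. Qed.
Lemma mid_diag a : mid a a = a.
Proof. destruct a; unfold mid; simpl; f_equal; field. Qed.
Lemma mid_sym a b : mid a b = mid b a.
Proof. unfold mid; f_equal; field. Qed.
Lemma d1_diag a : d1 a a = 0.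
Proof. unfold d1. rewrite !Rminus_diag, Rabs_R0. ring. Qed.
Lemma d1_sym a b : d1 a b = d1 b a.
Proof. unfold d1. rewrite (Rabs_minus_sym (fst a)), (Rabs_minus_sym (snd a)). ring. Qed.
Lemma d1_tri a b c : d1 a c <= d1 a b + d1 b c.
Proof. unfold d1. 
  pose proof (Rabs_triang (fst a - fst b) (fst b - fst c)). pose proof (Rabs_triang (snd a - snd b) (snd b - snd c)).
  replace (fst a - fst b + (fst b - fst c)) with (fst a - fst c) in * by ring.
  replace (snd a - snd b + (snd b - snd c)) with (snd a - snd c) in * by ring. lra. Qed.
Lemma d1_pos a b : 0 <= d1 a b.
Proof. unfold d1. pose proof (Rabs_pos (fst a - fst b)). pose proof (Rabs_pos (snd a - snd b)). lra. Qed.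

Lemma P_lip u v w a b : Cmod (P u v w a - P u v w b) <= (Cmod (u - w) + Cmod (v - w)) * d1 a b.
Proof. replace (P u v w a - P u v w b)%C with (RtoC (fst a - fst b) * (u - w) + RtoC (snd a - snd b) * (v - w))%C
    by (unfold P; ceq).
  eapply Rle_trans. apply Cmod_triangle. rewrite !Cmod_mult, !Cmod_R. unfold d1.
  pose proof (Cmod_ge_0 (u - w)%C). pose proof (Cmod_ge_0 (v - w)%C).
  pose proof (Rabs_pos (fst a - fst b)). pose proof (Rabs_pos (snd a - snd b)). nra. Qed.

Definition tri := (pt * pt * pt)%type.
Definition TriP psi u v w (t : tri) := let '(a, b, c) := t in Tri psi (P u v w a) (P u v w b) (P u v w c).
Definition s1 (t : tri) : tri := let '(a, b, c) := t in (a, mid a b, mid c a).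
Definition s2 (t : tri) : tri := let '(a, b, c) := t in (mid a b, b, mid b c).
Definition s3 (t : tri) : tri := let '(a, b, c) := t in (mid c a, mid b c, c).
Definition s4 (t : tri) : tri := let '(a, b, c) := t in (mid b c, mid c a, mid a b).
Definition inT (t : tri) := let '(a, b, c) := t in inS a /\ inS b /\ inS c.
Definition crad (t : tri) := let '(a, b, c) := t in d1 a b + d1 b c + d1 c a.
Definition fstv (t : tri) : pt := let '(a, b, c) := t in a.

Definition Sdiff psi u v w := forall c, inS c -> exists l, CD psi (P u v w c) l.

Lemma segCc_S psi u v w a b : Sdiff psi u v w -> inS a -> inS b -> segCc psi (P u v w a) (P u v w b).
Proof. intros H Ha Hb t Ht. rewrite <- P_comb. destruct (H _ (inS_comb a b t Ha Hb Ht)) as [l Hl].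
  exact (CD_Cc _ _ _ Hl). Qed.

Lemma SI_split_mid psi u v w a b : Sdiff psi u v w -> inS a -> inS b ->
  SI psi (P u v w a) (P u v w b) = (SI psi (P u v w a) (P u v w (mid a b)) + SI psi (P u v w (mid a b)) (P u v w b))%C.
Proof. intros H Ha Hb. rewrite P_mid. apply SI_split. lra. apply segCc_S; auto. Qed.

Lemma TriP_decomp psi u v w t : Sdiff psi u v w -> inT t ->
  TriP psi u v w t = (TriP psi u v w (s1 t) + TriP psi u v w (s2 t) + TriP psi u v w (s3 t) + TriP psi u v w (s4 t))%C.
Proof. intros H. destruct t as [[a b] c]. intros [Ha [Hb Hc]]. simpl. unfold Tri.
  rewrite (SI_split_mid psi u v w a b), (SI_split_mid psi u v w b c), (SI_split_mid psi u v w c a) by auto.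
  assert (Hab := inS_mid a b Ha Hb). assert (Hbc := inS_mid b c Hb Hc). assert (Hca := inS_mid c a Hc Ha).
  rewrite (SI_rev psi (P u v w (mid a b)) (P u v w (mid c a))) by (apply segCc_S; auto).
  rewrite (SI_rev psi (P u v w (mid b c)) (P u v w (mid a b))) by (apply segCc_S; auto).
  rewrite (SI_rev psi (P u v w (mid c a)) (P u v w (mid b c))) by (apply segCc_S; auto).
  ceq. Qed.

Definition best psi u v w (x y : tri) : tri := if Rle_dec (Cmod (TriP psi u v w x)) (Cmod (TriP psi u v w y)) then y else x.
Definition pick psi u v w (t : tri) : tri :=
  best psi u v w (best psi u v w (s1 t) (s2 t)) (best psi u v w (s3 t) (s4 t)).

Lemma best_ge psi u v w x y : Cmod (TriP psi u v w x) <= Cmod (TriP psi u v w (best psi u v w x y)) /\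
  Cmod (TriP psi u v w y) <= Cmod (TriP psi u v w (best psi u v w x y)).
Proof. unfold best. destruct Rle_dec; lra. Qed.
Lemma best_cases psi u v w x y : best psi u v w x y = x \/ best psi u v w x y = y.
Proof. unfold best. destruct Rle_dec; auto. Qed.

Lemma pick_cases psi u v w t : pick psi u v w t = s1 t \/ pick psi u v w t = s2 t \/ pick psi u v w t = s3 t \/ pick psi u v w t = s4 t.
Proof. unfold pick. destruct (best_cases psi u v w (s1 t) (s2 t)) as [E1|E1]; rewrite E1;
  destruct (best_cases psi u v w (s3 t) (s4 t)) as [E2|E2]; rewrite E2;
  match goal with |- context [best ?p ?u ?v ?w ?x ?y] => destruct (best_cases p u v w x y) as [E3|E3]; rewrite E3 end; tauto. Qed.

Lemma pick_ge psi u v w t : Sdiff psi u v w -> inT t -> Cmod (TriP psi u v w t) <= 4 * Cmod (TriP psi u v w (pick psi u v w t)).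
Proof. intros H Ht. rewrite (TriP_decomp psi u v w t H Ht). unfold pick.
  destruct (best_ge psi u v w (s1 t) (s2 t)). destruct (best_ge psi u v w (s3 t) (s4 t)).
  destruct (best_ge psi u v w (best psi u v w (s1 t) (s2 t)) (best psi u v w (s3 t) (s4 t))).
  pose proof (Cmod_triangle (TriP psi u v w (s1 t) + TriP psi u v w (s2 t) + TriP psi u v w (s3 t)) (TriP psi u v w (s4 t))).
  pose proof (Cmod_triangle (TriP psi u v w (s1 t) + TriP psi u v w (s2 t)) (TriP psi u v w (s3 t))).
  pose proof (Cmod_triangle (TriP psi u v w (s1 t)) (TriP psi u v w (s2 t))). lra. Qed.

Lemma subs_inT t : inT t -> inT (s1 t) /\ inT (s2 t) /\ inT (s3 t) /\ inT (s4 t).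
Proof. destruct t as [[a b] c]. intros [Ha [Hb Hc]]. simpl.
  pose proof (inS_mid a b Ha Hb). pose proof (inS_mid b c Hb Hc). pose proof (inS_mid c a Hc Ha). tauto. Qed.

Lemma subs_crad t : crad (s1 t) <= crad t / 2 /\ crad (s2 t) <= crad t / 2 /\ crad (s3 t) <= crad t / 2 /\ crad (s4 t) <= crad t / 2.
Proof. destruct t as [[a b] c]. simpl.
  pose proof (d1_diag a). pose proof (d1_diag b). pose proof (d1_diag c).
  pose proof (d1_sym a b). pose proof (d1_sym b c). pose proof (d1_sym c a).
  pose proof (d1_mid a a a b) as X1. rewrite mid_diag in X1.
  pose proof (d1_mid a b a c) as X2. rewrite (mid_sym a c) in X2.
  pose proof (d1_mid c a a a) as X3. rewrite mid_diag in X3.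
  pose proof (d1_mid a b b b) as X4. rewrite mid_diag in X4.
  pose proof (d1_mid b b b c) as X5. rewrite mid_diag in X5.
  pose proof (d1_mid b c b a) as X6. rewrite (mid_sym b a) in X6.
  pose proof (d1_mid c a c b) as X7. rewrite (mid_sym c b) in X7.
  pose proof (d1_mid b c c c) as X8. rewrite mid_diag in X8.
  pose proof (d1_mid c c c a) as X9. rewrite mid_diag in X9.
  pose proof (d1_mid c b c a) as Y1. rewrite (mid_sym c b) in Y1.
  pose proof (d1_mid a c a b) as Y2. rewrite (mid_sym a c) in Y2.
  pose proof (d1_mid b a b c) as Y3. rewrite (mid_sym b a) in Y3.
  repeat split; lra. Qed.

Lemma subs_fst t : d1 (fstv (s1 t)) (fstv t) <= crad t /\ d1 (fstv (s2 t)) (fstv t) <= crad t /\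
  d1 (fstv (s3 t)) (fstv t) <= crad t /\ d1 (fstv (s4 t)) (fstv t) <= crad t.
Proof. destruct t as [[a b] c]. simpl.
  pose proof (d1_diag a). pose proof (d1_pos a b). pose proof (d1_pos b c). pose proof (d1_pos c a).
  pose proof (d1_mid a b a a) as X1. rewrite mid_diag in X1.
  pose proof (d1_mid c a a a) as X2. rewrite mid_diag in X2.
  pose proof (d1_mid b c a a) as X3. rewrite mid_diag in X3.
  pose proof (d1_sym a b). pose proof (d1_sym a c). pose proof (d1_tri b a c). pose proof (d1_sym c a).
  repeat split; lra. Qed.

Lemma pick_props psi u v w t : inT t -> inT (pick psi u v w t) /\ crad (pick psi u v w t) <= crad t / 2 /\
  d1 (fstv (pick psi u v w t)) (fstv t) <= crad t.
Proof. intros Ht. pose proof (subs_inT t Ht). pose proof (subs_crad t). pose proof (subs_fst t).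
  destruct (pick_cases psi u v w t) as [E|[E|[E|E]]]; rewrite E; tauto. Qed.

Lemma half_pow_small K eps : 0 < eps -> exists n, K * (/2)^n < eps.
Proof. intros He. destruct (pow_lt_1_zero (/2) ltac:(rewrite Rabs_right; lra) (eps / (Rabs K + 1))) as [N HN].
  apply Rdiv_lt_0_compat; auto. pose proof (Rabs_pos K); lra.
  exists N. specialize (HN N (Nat.le_refl N)). rewrite Rabs_right in HN.
  2: apply Rle_ge, pow_le; lra.
  assert (0 <= (/2)^N) by (apply pow_le; lra).
  apply Rle_lt_trans with ((Rabs K + 1) * (/2)^N).
  pose proof (Rle_abs K). nra.
  apply Rlt_le_trans with ((Rabs K + 1) * (eps / (Rabs K + 1))).
  apply Rmult_lt_compat_l; auto. pose proof (Rabs_pos K); lra. right; field. pose proof (Rabs_pos K); lra. Qed.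

Lemma le_0_of_pow K x : (forall n, x <= K * (/2)^n) -> x <= 0.
Proof. intros H. apply le_epsilon. intros eps He. destruct (half_pow_small K eps He) as [n Hn].
  specialize (H n). lra. Qed.

Lemma seq_lim (a : nat -> pt) c : (forall n, d1 (a (S n)) (a n) <= c * (/2)^n) ->
  exists L, forall n, d1 L (a n) <= 4 * c * (/2)^n.
Proof. intros H.
  assert (Hc : 0 <= c). { specialize (H 0%nat). pose proof (d1_pos (a 1%nat) (a 0%nat)). simpl in H. lra. }
  assert (Hp : forall n, 0 <= (/2)^n) by (intros; apply pow_le; lra).
  assert (S1 : forall n k, d1 (a (n + k)%nat) (a n) <= 2 * c * (/2)^n - 2 * c * (/2)^(n + k)).
  { intros n k. induction k.
    - rewrite Nat.add_0_r, d1_diag. lra.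
    - replace (n + S k)%nat with (S (n + k)) by lia.
      eapply Rle_trans. apply (d1_tri _ (a (n + k)%nat)). specialize (H (n + k)%nat).
      simpl pow. lra. }
  assert (S2 : forall n k, d1 (a (n + k)%nat) (a n) <= 2 * c * (/2)^n).
  { intros n k. specialize (S1 n k). specialize (Hp (n + k)%nat). nra. }
  assert (Lim : forall (proj : pt -> R), (forall x y, Rabs (proj x - proj y) <= d1 x y) ->
     exists l, forall n, Rabs (l - proj (a n)) <= 2 * c * (/2)^n).
  { intros proj Hproj.
    assert (CC : Cauchy_crit (fun n => proj (a n))).
    { intros eps He. destruct (half_pow_small (4 * c) eps He) as [N HN]. exists N.
      intros n m Hn Hm. unfold R_dist.
      pose proof (Hproj (a n) (a N)) as P1. pose proof (Hproj (a m) (a N)) as P2.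
      replace n with (N + (n - N))%nat in P1 by lia. replace m with (N + (m - N))%nat in P2 by lia.
      pose proof (S2 N (n - N)%nat). pose proof (S2 N (m - N)%nat).
      replace (N + (n - N))%nat with n in * by lia. replace (N + (m - N))%nat with m in * by lia.
      pose proof (Rabs_triang (proj (a n) - proj (a N)) (proj (a N) - proj (a m))).
      rewrite (Rabs_minus_sym (proj (a N))) in H2.
      replace (proj (a n) - proj (a N) + (proj (a N) - proj (a m))) with (proj (a n) - proj (a m)) in H2 by ring.
      lra. }
    destruct (Rcomplete.R_complete _ CC) as [l Hl]. exists l. intros n.
    apply le_epsilon. intros eps He. destruct (Hl eps He) as [N HN].
    specialize (HN (n + N)%nat ltac:(lia)). unfold R_dist in HN.
    pose proof (Hproj (a (n + N)%nat) (a n)). pose proof (S2 n N).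
    pose proof (Rabs_triang (l - proj (a (n + N)%nat)) (proj (a (n + N)%nat) - proj (a n))).
    replace (l - proj (a (n + N)%nat) + (proj (a (n + N)%nat) - proj (a n))) with (l - proj (a n)) in H2 by ring.
    rewrite Rabs_minus_sym in HN. lra. }
  destruct (Lim fst) as [l1 H1]. { intros x y. unfold d1. pose proof (Rabs_pos (snd x - snd y)). lra. }
  destruct (Lim snd) as [l2 H2]. { intros x y. unfold d1. pose proof (Rabs_pos (fst x - fst y)). lra. }
  exists (l1, l2). intros n. unfold d1; simpl. specialize (H1 n). specialize (H2 n). lra. Qed.

Lemma CD_lin (A B0 z : C) : CD (fun x => A + B0 * x)%C z B0.
Proof. apply CD_intro. intros eps He. exists 1. split. lra. intros w _.
  replace (A + B0 * w - (A + B0 * z) - B0 * (w - z))%C with (RtoC 0) by ceq. rewrite Cmod_0.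
  pose proof (Cmod_ge_0 (w - z)%C). nra. Qed.

Lemma Cc_minus f g z : Cc f z -> Cc g z -> Cc (fun x => f x - g x)%C z.
Proof. intros H1 H2 eps He. destruct (H1 (eps/2) ltac:(lra)) as [d1' [Hd1 K1]].
  destruct (H2 (eps/2) ltac:(lra)) as [d2 [Hd2 K2]]. exists (Rmin d1' d2). split. apply Rmin_glb_lt; auto.
  intros w Hw. pose proof (Rmin_l d1' d2). pose proof (Rmin_r d1' d2).
  specialize (K1 w ltac:(lra)). specialize (K2 w ltac:(lra)).
  replace (f w - g w - (f z - g z))%C with ((f w - f z) + - (g w - g z))%C by ceq.
  eapply Rle_lt_trans. apply Cmod_triangle. rewrite Cmod_opp. lra. Qed.

Lemma seg_dist X Y z0 r t : 0 <= t <= 1 -> Cmod (X - z0) <= r -> Cmod (Y - z0) <= r -> Cmod (X + RtoC t * (Y - X) - z0) <= r.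
Proof. intros Ht HX HY. replace (X + RtoC t * (Y - X) - z0)%C with (RtoC (1 - t) * (X - z0) + RtoC t * (Y - z0))%C by ceq.
  eapply Rle_trans. apply Cmod_triangle. rewrite !Cmod_mult, !Cmod_R, !Rabs_right by lra. nra. Qed.

Lemma Tri_est psi X Y Z z0 l0 eps r : segCc psi X Y -> segCc psi Y Z -> segCc psi Z X -> 0 <= eps ->
  (forall x, Cmod (x - z0) <= r -> Cmod (psi x - psi z0 - l0 * (x - z0)) <= eps * Cmod (x - z0)) ->
  Cmod (X - z0) <= r -> Cmod (Y - z0) <= r -> Cmod (Z - z0) <= r ->
  Cmod (Tri psi X Y Z) <= eps * r * (Cmod (Y - X) + Cmod (Z - Y) + Cmod (X - Z)).
Proof. intros H1 H2 H3 He Hd HX HY HZ.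
  set (A := (psi z0 - l0 * z0)%C).
  set (phi := fun x => (psi x - (A + l0 * x))%C).
  assert (HL : forall X Y, segCc (fun x => A + l0 * x)%C X Y).
  { intros X' Y' t _. exact (CD_Cc _ _ _ (CD_lin A l0 _)). }
  assert (Hphi : forall X Y, segCc psi X Y -> segCc phi X Y).
  { intros X' Y' H t Ht. apply Cc_minus. apply H; auto. apply HL; auto. }
  assert (E : forall X Y, segCc psi X Y -> SI psi X Y = (SI phi X Y + SI (fun x => A + l0 * x)%C X Y)%C).
  { intros X' Y' H. unfold phi. rewrite SI_minus; auto. ceq. }
  assert (B : forall X Y, segCc psi X Y -> Cmod (X - z0) <= r -> Cmod (Y - z0) <= r -> Cmod (SI phi X Y) <= eps * r * Cmod (Y - X)).
  { intros X' Y' H HX' HY'. apply SI_bound. apply Hphi; auto.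
    intros t Ht. pose proof (seg_dist X' Y' z0 r t Ht HX' HY') as D.
    unfold phi. replace (psi (X' + RtoC t * (Y' - X')) - (A + l0 * (X' + RtoC t * (Y' - X'))))%C with
       (psi (X' + RtoC t * (Y' - X')) - psi z0 - l0 * ((X' + RtoC t * (Y' - X')) - z0))%C by (unfold A; ceq).
    eapply Rle_trans. apply Hd; auto. apply Rmult_le_compat_l; auto. }
  unfold Tri. rewrite (E X Y H1), (E Y Z H2), (E Z X H3). rewrite !SI_lin.
  replace (SI phi X Y + ((A + l0 * X) * (Y - X) + l0 * (Y - X) * (Y - X) * RtoC (/ 2)) +
    (SI phi Y Z + ((A + l0 * Y) * (Z - Y) + l0 * (Z - Y) * (Z - Y) * RtoC (/ 2))) +
    (SI phi Z X + ((A + l0 * Z) * (X - Z) + l0 * (X - Z) * (X - Z) * RtoC (/ 2))))%C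
    with (SI phi X Y + SI phi Y Z + SI phi Z X)%C.
  2: { apply Ceq2; unfold Cminus, Cplus, Cmult, Copp, RtoC; simpl; field. }
  pose proof (B X Y H1 HX HY). pose proof (B Y Z H2 HY HZ). pose proof (B Z X H3 HZ HX).
  eapply Rle_trans. apply Cmod_triangle. pose proof (Cmod_triangle (SI phi X Y) (SI phi Y Z)). lra. Qed.

Lemma goursat psi u v w : Sdiff psi u v w -> Tri psi u v w = 0%C.
Proof. intros H.
  set (T0 := ((1, 0), (0, 1), (0, 0)) : tri).
  assert (HT0 : inT T0). { unfold T0, inT, inS; simpl; lra. }
  assert (E0 : TriP psi u v w T0 = Tri psi u v w).
  { unfold T0, TriP. assert (Eu : P u v w (1, 0) = u) by (unfold P; ceq).
    assert (Ev : P u v w (0, 1) = v) by (unfold P; ceq). assert (Ew : P u v w (0, 0) = w) by (unfold P; ceq).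
    rewrite Eu, Ev, Ew. reflexivity. }
  rewrite <- E0.
  set (T := fun n => Nat.iter n (pick psi u v w) T0).
  set (c := crad T0).
  assert (HTn : forall n, inT (T n) /\ crad (T n) <= c * (/2)^n /\ Cmod (TriP psi u v w T0) <= 4^n * Cmod (TriP psi u v w (T n))).
  { induction n as [|n IH].
    - change (T 0%nat) with T0. rewrite !pow_O. unfold c. split; [exact HT0|]. split; lra.
    - destruct IH as [I1 [I2 I3]]. change (T (S n)) with (pick psi u v w (T n)).
      destruct (pick_props psi u v w (T n) I1) as [J1 [J2 J3]].
      pose proof (pick_ge psi u v w (T n) H I1). simpl pow.
      split; auto. split. lra.
      assert (0 <= 4 ^ n) by (apply pow_le; lra). nra. }
  destruct (seq_lim (fun n => fstv (T n)) c) as [L HL].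
  { intros n. change (T (S n)) with (pick psi u v w (T n)).
    destruct (HTn n) as [I1 [I2 I3]]. destruct (pick_props psi u v w (T n) I1) as [J1 [J2 J3]]. lra. }
  assert (HLS : inS L).
  { assert (Fa : forall n, inS (fstv (T n))). { intros n. destruct (HTn n) as [I1 _]. destruct (T n) as [[a b] cc]. apply I1. }
    unfold inS. split; [|split].
    - assert (- fst L <= 0); [|lra]. apply (le_0_of_pow (4 * c)). intros n. specialize (HL n). specialize (Fa n).
      unfold d1, inS in *. pose proof (Rle_abs (- (fst L - fst (fstv (T n))))). rewrite Rabs_Ropp in H0. pose proof (Rabs_pos (snd L - snd (fstv (T n)))). lra.
    - assert (- snd L <= 0); [|lra]. apply (le_0_of_pow (4 * c)). intros n. specialize (HL n). specialize (Fa n).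
      unfold d1, inS in *. pose proof (Rle_abs (- (snd L - snd (fstv (T n))))). rewrite Rabs_Ropp in H0. pose proof (Rabs_pos (fst L - fst (fstv (T n)))). lra.
    - assert (fst L + snd L - 1 <= 0); [|lra]. apply (le_0_of_pow (4 * c)). intros n. specialize (HL n). specialize (Fa n).
      unfold d1, inS in *. pose proof (Rle_abs (snd L - snd (fstv (T n)))). pose proof (Rle_abs (fst L - fst (fstv (T n)))). lra. }
  destruct (H L HLS) as [l0 Hl0].
  set (K := (Cmod (u - w) + Cmod (v - w))).
  assert (HK : 0 <= K) by (unfold K; pose proof (Cmod_ge_0 (u - w)%C); pose proof (Cmod_ge_0 (v - w)%C); lra).
  assert (Hc : 0 <= c) by (destruct (HTn 0%nat) as [_ [X _]]; simpl in X; pose proof (crad T0);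
     unfold c, T0, crad; pose proof (d1_pos (1,0) (0,1)); pose proof (d1_pos (0,1) (0,0)); pose proof (d1_pos (0,0) (1,0)); lra).
  assert (Main : forall eps, 0 < eps -> Cmod (TriP psi u v w T0) <= 5 * K * K * c * c * eps).
  { intros eps He. destruct (CD_eps _ _ _ Hl0 eps He) as [dl [Hdl Hd]].
    destruct (half_pow_small (5 * K * c) dl Hdl) as [n Hn].
    set (r := 5 * K * c * (/2)^n).
    assert (Hp : 0 <= (/2)^n) by (apply pow_le; lra).
    destruct (HTn n) as [I1 [I2 I3]].
    assert (HL' := HL n).
    assert (Hd' : forall x, Cmod (x - P u v w L) <= r -> Cmod (psi x - psi (P u v w L) - l0 * (x - P u v w L)) <= eps * Cmod (x - P u v w L)).
    { intros x Hx. apply Hd. unfold r in *. lra. }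
    revert I1 I2 I3 HL'. unfold fstv. destruct (T n) as [[a b] cc]. intros [Ha [Hb Hcc]] I2 I3 HL'.
    simpl in I2. 
    assert (Vb : forall x, d1 x a <= crad (a, b, cc) -> Cmod (P u v w x - P u v w L) <= r).
    { intros x Hx. eapply Rle_trans. apply P_lip. fold K. unfold r.
      pose proof (d1_tri x a L). rewrite (d1_sym a L) in H0. simpl in Hx.
      assert (d1 x L <= 5 * c * (/2)^n) by lra. nra. }
    assert (Va : Cmod (P u v w a - P u v w L) <= r). { apply Vb. rewrite d1_diag. simpl. pose proof (d1_pos a b). pose proof (d1_pos b cc). pose proof (d1_pos cc a). lra. }
    assert (Vbb : Cmod (P u v w b - P u v w L) <= r). { apply Vb. rewrite d1_sym. simpl. pose proof (d1_pos b cc). pose proof (d1_pos cc a). lra. }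
    assert (Vc : Cmod (P u v w cc - P u v w L) <= r). { apply Vb. simpl. pose proof (d1_pos b cc). pose proof (d1_pos a b). lra. }
    pose proof (Tri_est psi (P u v w a) (P u v w b) (P u v w cc) (P u v w L) l0 eps r
      (segCc_S psi u v w a b H Ha Hb) (segCc_S psi u v w b cc H Hb Hcc) (segCc_S psi u v w cc a H Hcc Ha)
      ltac:(lra) Hd' Va Vbb Vc) as Est.
    assert (Per : Cmod (P u v w b - P u v w a) + Cmod (P u v w cc - P u v w b) + Cmod (P u v w a - P u v w cc) <= K * (c * (/2)^n)).
    { pose proof (P_lip u v w b a). pose proof (P_lip u v w cc b). pose proof (P_lip u v w a cc). fold K in H0, H1, H2.
      rewrite (d1_sym b a), (d1_sym cc b), (d1_sym a cc) in *. nra. }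
    simpl TriP in I3.
    assert (Hr : 0 <= r) by (unfold r; apply Rmult_le_pos; [nra|lra]).
    assert (Q : 4 ^ n * ((/2)^n * (/2)^n) = 1). { rewrite <- !Rpow_mult_distr. replace (4 * (/2 * /2)) with 1 by field. apply pow1. }
    assert (0 <= 4 ^ n) by (apply pow_le; lra).
    assert (Cmod (Tri psi (P u v w a) (P u v w b) (P u v w cc)) <= eps * r * (K * (c * (/ 2) ^ n))).
    { eapply Rle_trans. exact Est. apply Rmult_le_compat_l. nra. exact Per. }
    apply Rle_trans with (4 ^ n * (eps * r * (K * (c * (/ 2) ^ n)))). { eapply Rle_trans; [exact I3|]. apply Rmult_le_compat_l; auto. }
    right. unfold r. transitivity (5 * K * K * c * c * eps * (4 ^ n * ((/2)^n * (/2)^n))). ring. rewrite Q. ring. }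
  assert (Cmod (TriP psi u v w T0) <= 0).
  { apply le_epsilon. intros eps He. set (X := 5 * K * K * c * c) in *.
    destruct (Rle_lt_dec X 0) as [Z|Z].
    - pose proof (Main 1 ltac:(lra)) as M. lra.
    - pose proof (Main (eps / X) ltac:(apply Rdiv_lt_0_compat; lra)) as M.
      replace (X * (eps / X)) with eps in M by (field; lra). lra. }
  apply Cmod_eq_0. pose proof (Cmod_ge_0 (TriP psi u v w T0)). lra. Qed.

Definition inD (a : C) (R0 : R) (z : C) := Cmod (z - a) < R0.
Definition HolExc (psi : C -> C) (a : C) (R0 : R) (p : C) :=
  inD a R0 p /\ Cc psi p /\ forall z, inD a R0 z -> z <> p -> exists l, CD psi z l.

Lemma inD_seg a R0 X Y t : inD a R0 X -> inD a R0 Y -> 0 <= t <= 1 -> inD a R0 (X + RtoC t * (Y - X))%C.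
Proof. unfold inD. intros HX HY Ht.
  replace (X + RtoC t * (Y - X) - a)%C with (RtoC (1 - t) * (X - a) + RtoC t * (Y - a))%C by ceq.
  eapply Rle_lt_trans. apply Cmod_triangle. rewrite !Cmod_mult, !Cmod_R, !Rabs_right by lra.
  destruct (Req_dec t 0). subst. nra. nra. Qed.

Lemma inD_line a R0 p d al be x : inD a R0 (p + RtoC al * d)%C -> inD a R0 (p + RtoC be * d)%C -> al <= x <= be ->
  inD a R0 (p + RtoC x * d)%C.
Proof. intros H1 H2 Hx. destruct (Req_dec al be) as [E|E].
  - subst. replace x with be by lra. auto.
  - replace (p + RtoC x * d)%C with ((p + RtoC al * d) + RtoC ((x - al) / (be - al)) * ((p + RtoC be * d) - (p + RtoC al * d)))%C.
    apply inD_seg; auto. split. apply Rdiv_le_0_compat; lra. apply Rmult_le_reg_r with (be - al). lra.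
    unfold Rdiv. rewrite Rmult_assoc, Rinv_l by lra. lra.
    apply Ceq2; unfold Cminus, Cplus, Cmult, Copp, RtoC; simpl; field; lra. Qed.

Lemma inD_P a R0 u v w c : inD a R0 u -> inD a R0 v -> inD a R0 w -> inS c -> inD a R0 (P u v w c).
Proof. unfold inD, inS, P. intros Hu Hv Hw [H1 [H2 H3]].
  replace (RtoC (fst c) * u + RtoC (snd c) * v + RtoC (1 - fst c - snd c) * w - a)%C with
    (RtoC (fst c) * (u - a) + RtoC (snd c) * (v - a) + RtoC (1 - fst c - snd c) * (w - a))%C by ceq.
  set (c1 := fst c) in *. set (c2 := snd c) in *.
  pose proof (Cmod_triangle (RtoC c1 * (u - a) + RtoC c2 * (v - a)) (RtoC (1 - c1 - c2) * (w - a))).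
  pose proof (Cmod_triangle (RtoC c1 * (u - a)) (RtoC c2 * (v - a))).
  rewrite !Cmod_mult, !Cmod_R, !(Rabs_right c1), !(Rabs_right c2), !(Rabs_right (1 - c1 - c2)) in * by lra.
  set (m := Rmin (R0 - Cmod (u - a)) (Rmin (R0 - Cmod (v - a)) (R0 - Cmod (w - a)))).
  assert (m <= R0 - Cmod (u - a)) by apply Rmin_l.
  assert (m <= R0 - Cmod (v - a)) by (eapply Rle_trans; [apply Rmin_r|apply Rmin_l]).
  assert (m <= R0 - Cmod (w - a)) by (eapply Rle_trans; [apply Rmin_r|apply Rmin_r]).
  assert (0 < m) by (unfold m; repeat apply Rmin_glb_lt; lra).
  assert (c1 * (R0 - Cmod (u - a)) + c2 * (R0 - Cmod (v - a)) + (1 - c1 - c2) * (R0 - Cmod (w - a)) >= m) by nra.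
  nra. Qed.

Lemma HolExc_Cc psi a R0 p z : HolExc psi a R0 p -> inD a R0 z -> Cc psi z.
Proof. intros [_ [Hp H]] Hz. destruct (Ceq_dec z p) as [->|E]; auto.
  destruct (H z Hz E) as [l Hl]. exact (CD_Cc _ _ _ Hl). Qed.

Lemma HolExc_seg psi a R0 p X Y : HolExc psi a R0 p -> inD a R0 X -> inD a R0 Y -> segCc psi X Y.
Proof. intros H HX HY t Ht. apply (HolExc_Cc psi a R0 p); auto. apply inD_seg; auto. Qed.

Definition cr (x y : C) := fst x * snd y - snd x * fst y.

Lemma indep X Y al be : cr X Y <> 0 -> (RtoC al * X + RtoC be * Y)%C = 0%C -> al = 0 /\ be = 0.
Proof. intros Hc E. unfold cr in Hc. 
  assert (E1 : al * fst X + be * fst Y = 0) by (apply (f_equal fst) in E; simpl in E; lra).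
  assert (E2 : al * snd X + be * snd Y = 0) by (apply (f_equal snd) in E; simpl in E; lra).
  split.
  - assert (al * (fst X * snd Y - snd X * fst Y) = 0) by (replace (al * (fst X * snd Y - snd X * fst Y)) with (snd Y * (al * fst X + be * fst Y) - fst Y * (al * snd X + be * snd Y)) by ring; rewrite E1, E2; ring).
    destruct (Rmult_integral _ _ H); auto. contradiction.
  - assert (be * (fst X * snd Y - snd X * fst Y) = 0) by (replace (be * (fst X * snd Y - snd X * fst Y)) with (fst X * (al * snd X + be * snd Y) - snd X * (al * fst X + be * fst Y)) by ring; rewrite E1, E2; ring).
    destruct (Rmult_integral _ _ H); auto. contradiction. Qed.

Lemma collinear_rep X Y : cr X Y = 0 -> X <> 0%C -> exists s, Y = (RtoC s * X)%C.
Proof. intros Hc HX. unfold cr in Hc.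
  assert (N : fst X * fst X + snd X * snd X <> 0).
  { intros N. apply HX. destruct X as [x1 x2]; simpl in *. assert (x1 = 0) by nra. assert (x2 = 0) by nra. subst. reflexivity. }
  exists ((fst Y * fst X + snd Y * snd X) / (fst X * fst X + snd X * snd X)).
  destruct X as [x1 x2]; destruct Y as [y1 y2]; simpl in *.
  assert (A1 : y1 * (x1 * x1 + x2 * x2) - (y1 * x1 + y2 * x2) * x1 = - x2 * (x1 * y2 - x2 * y1)) by ring.
  assert (A2 : y2 * (x1 * x1 + x2 * x2) - (y1 * x1 + y2 * x2) * x2 = x1 * (x1 * y2 - x2 * y1)) by ring.
  rewrite Hc in A1, A2.
  apply Ceq2; unfold RtoC, Cmult; simpl.
  - apply Rmult_eq_reg_r with (x1 * x1 + x2 * x2); auto. field_simplify; auto. nra.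
  - apply Rmult_eq_reg_r with (x1 * x1 + x2 * x2); auto. field_simplify; auto. nra. Qed.

Lemma SI_self psi p : segCc psi p p -> SI psi p p = 0%C.
Proof. intros H. pose proof (SI_rev psi p p H) as E.
  pose proof (f_equal fst E) as E1. pose proof (f_equal snd E) as E2. simpl in E1, E2.
  apply Ceq2; simpl; lra. Qed.

Lemma vertex_collinear psi a R0 p u v : HolExc psi a R0 p -> inD a R0 u -> inD a R0 v -> cr (u - p) (v - p) = 0 ->
  Tri psi p u v = 0%C.
Proof. intros H Hu Hv Hc. pose proof H as [Hp [Hcp Hd]].
  assert (Cl : forall d al be x, inD a R0 (p + RtoC al * d)%C -> inD a R0 (p + RtoC be * d)%C -> al <= x <= be ->
    Cc psi (p + RtoC x * d)%C).
  { intros d al be x H1 H2 Hx. apply (HolExc_Cc psi a R0 p _ H). apply (inD_line a R0 p d al be); auto. }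
  destruct (Ceq_dec u p) as [->|Eu].
  - unfold Tri. apply (SI_collinear psi p (v - p) p p v 0 0 1); try ceq.
    intros x Hx. assert (0 <= x <= 1) by (unfold Rmin, Rmax in Hx; repeat destruct Rle_dec in Hx; lra).
    apply (Cl (v - p)%C 0 1); try lra.
    replace (p + RtoC 0 * (v - p))%C with p by ceq. auto. replace (p + RtoC 1 * (v - p))%C with v by ceq. auto.
  - destruct (collinear_rep (u - p) (v - p) Hc) as [s Hs].
    { intros E. apply Eu. apply (f_equal (fun z => z + p)%C) in E. replace (u - p + p)%C with u in E by ceq. rewrite E. ceq. }
    assert (Ev : v = (p + RtoC s * (u - p))%C). { replace v with ((v - p) + p)%C by ceq. rewrite Hs. ceq. }
    unfold Tri. apply (SI_collinear psi p (u - p) p u v 0 1 s); try ceq; auto.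
    assert (I0 : inD a R0 (p + RtoC 0 * (u - p))%C) by (replace (p + RtoC 0 * (u - p))%C with p by ceq; auto).
    assert (I1 : inD a R0 (p + RtoC 1 * (u - p))%C) by (replace (p + RtoC 1 * (u - p))%C with u by ceq; auto).
    assert (Is : inD a R0 (p + RtoC s * (u - p))%C) by (rewrite <- Ev; auto).
    intros x Hx. unfold Rmin, Rmax in Hx. repeat destruct Rle_dec in Hx.
    all: first [ apply (Cl _ 0 1); auto; lra | apply (Cl _ s 1); auto; lra | apply (Cl _ 0 s); auto; lra | lra ]. Qed.

Lemma vertex psi a R0 p u v : HolExc psi a R0 p -> inD a R0 u -> inD a R0 v -> Tri psi p u v = 0%C.
Proof. intros H Hu Hv. destruct (Req_dec (cr (u - p) (v - p)) 0) as [Hc|Hc].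
  { eapply vertex_collinear; eauto. }
  pose proof H as [Hp [Hcp Hd]].
  assert (Seg : forall X Y, inD a R0 X -> inD a R0 Y -> segCc psi X Y) by (intros; eapply HolExc_seg; eauto).
  assert (Small : forall t, 0 < t <= 1 -> Tri psi p u v = Tri psi p (p + RtoC t * (u - p)) (p + RtoC t * (v - p))).
  { intros t Ht. set (ut := (p + RtoC t * (u - p))%C). set (vt := (p + RtoC t * (v - p))%C).
    assert (Iut : inD a R0 ut) by (apply inD_seg; auto; lra).
    assert (Ivt : inD a R0 vt) by (apply inD_seg; auto; lra).
    assert (Z1 : Tri psi ut u v = 0%C).
    { apply goursat. intros c Hcs. 
      assert (ID : inD a R0 (P ut u v c)) by (apply inD_P; auto).
      apply Hd; auto. intros E.
      assert (E' : (RtoC (fst c * t + snd c) * (u - p) + RtoC (1 - fst c - snd c) * (v - p))%C = 0%C).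
      { transitivity (P ut u v c - p)%C. unfold P, ut. ceq. rewrite E. ceq. }
      destruct (indep _ _ _ _ Hc E') as [A1 A2]. destruct Hcs as [? [? ?]]. nra. }
    assert (Z2 : Tri psi ut v vt = 0%C).
    { apply goursat. intros c Hcs. 
      assert (ID : inD a R0 (P ut v vt c)) by (apply inD_P; auto).
      apply Hd; auto. intros E.
      assert (E' : (RtoC (fst c * t) * (u - p) + RtoC (snd c + (1 - fst c - snd c) * t) * (v - p))%C = 0%C).
      { transitivity (P ut v vt c - p)%C. unfold P, ut, vt. ceq. rewrite E. ceq. }
      destruct (indep _ _ _ _ Hc E') as [A1 A2]. destruct Hcs as [? [? ?]]. nra. }
    unfold Tri in *.
    rewrite (SI_split psi p u t) by (auto; lra). fold ut.
    rewrite (SI_split psi v p (1 - t)) by (auto; lra).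
    replace (v + RtoC (1 - t) * (p - v))%C with vt by (unfold vt; ceq).
    rewrite (SI_rev psi ut v) in Z1 by auto. rewrite (SI_rev psi ut vt) in Z2 by auto.
    set (X1 := SI psi p ut) in *. set (X2 := SI psi ut u) in *. set (X3 := SI psi u v) in *.
    set (X4 := SI psi v vt) in *. set (X5 := SI psi vt p) in *. set (X6 := SI psi ut v) in *.
    set (X7 := SI psi ut vt) in *.
    replace (X1 + X2 + X3 + (X4 + X5))%C with (X1 + X7 + X5 + (X2 + X3 + - X6) + (X6 + X4 + - X7))%C by ceq.
    rewrite Z1, Z2. ceq. }
  destruct (Hcp 1 ltac:(lra)) as [dl [Hdl Hcl]].
  set (M := Cmod (u - p) + Cmod (v - p) + 1).
  assert (HM : 1 <= M) by (unfold M; pose proof (Cmod_ge_0 (u - p)%C); pose proof (Cmod_ge_0 (v - p)%C); lra).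
  set (B0 := Cmod (psi p) + 1).
  assert (HB0 : 1 <= B0) by (unfold B0; pose proof (Cmod_ge_0 (psi p)); lra).
  assert (Bd : forall t, 0 < t <= 1 -> t * M < dl -> Cmod (Tri psi p u v) <= B0 * (2 * t * M)).
  { intros t Ht HtM. rewrite (Small t Ht). set (ut := (p + RtoC t * (u - p))%C). set (vt := (p + RtoC t * (v - p))%C).
    assert (Iut : inD a R0 ut) by (apply inD_seg; auto; lra).
    assert (Ivt : inD a R0 vt) by (apply inD_seg; auto; lra).
    assert (Dp : Cmod (p - p) <= t * M) by (replace (p - p)%C with (RtoC 0) by ceq; rewrite Cmod_0; nra).
    assert (Du : Cmod (ut - p) <= t * M).
    { unfold ut. replace (p + RtoC t * (u - p) - p)%C with (RtoC t * (u - p))%C by ceq. rewrite Cmod_mult, Cmod_R, Rabs_right by lra.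
      unfold M. pose proof (Cmod_ge_0 (v - p)%C). pose proof (Cmod_ge_0 (u - p)%C). nra. }
    assert (Dv : Cmod (vt - p) <= t * M).
    { unfold vt. replace (p + RtoC t * (v - p) - p)%C with (RtoC t * (v - p))%C by ceq. rewrite Cmod_mult, Cmod_R, Rabs_right by lra.
      unfold M. pose proof (Cmod_ge_0 (v - p)%C). pose proof (Cmod_ge_0 (u - p)%C). nra. }
    assert (SB : forall X Y, inD a R0 X -> inD a R0 Y -> Cmod (X - p) <= t * M -> Cmod (Y - p) <= t * M ->
       Cmod (SI psi X Y) <= B0 * Cmod (Y - X)).
    { intros X Y HX HY DX DY. apply SI_bound. apply Seg; auto.
      intros s Hs. pose proof (seg_dist X Y p (t * M) s Hs DX DY).
      specialize (Hcl (X + RtoC s * (Y - X))%C ltac:(lra)).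
      replace (psi (X + RtoC s * (Y - X))%C) with ((psi (X + RtoC s * (Y - X)) - psi p) + psi p)%C by ceq.
      eapply Rle_trans. apply Cmod_triangle. unfold B0. lra. }
    pose proof (SB p ut Hp Iut Dp Du). pose proof (SB ut vt Iut Ivt Du Dv). pose proof (SB vt p Ivt Hp Dv Dp).
    assert (L1 : Cmod (ut - p) <= t * Cmod (u - p)).
    { unfold ut. replace (p + RtoC t * (u - p) - p)%C with (RtoC t * (u - p))%C by ceq. rewrite Cmod_mult, Cmod_R, Rabs_right by lra. lra. }
    assert (L2 : Cmod (vt - ut) <= t * (Cmod (u - p) + Cmod (v - p))).
    { unfold ut, vt. replace (p + RtoC t * (v - p) - (p + RtoC t * (u - p)))%C with (RtoC t * ((v - p) + - (u - p)))%C by ceq.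
      rewrite Cmod_mult, Cmod_R, Rabs_right by lra. pose proof (Cmod_triangle (v - p) (- (u - p))). rewrite Cmod_opp in H3. nra. }
    assert (L3 : Cmod (p - vt) <= t * Cmod (v - p)).
    { unfold vt. replace (p - (p + RtoC t * (v - p)))%C with (- (RtoC t * (v - p)))%C by ceq. rewrite Cmod_opp, Cmod_mult, Cmod_R, Rabs_right by lra. lra. }
    unfold Tri. pose proof (Cmod_triangle (SI psi p ut + SI psi ut vt) (SI psi vt p)).
    pose proof (Cmod_triangle (SI psi p ut) (SI psi ut vt)).
    unfold M in *. pose proof (Cmod_ge_0 (u - p)%C). pose proof (Cmod_ge_0 (v - p)%C). nra. }
  assert (Cmod (Tri psi p u v) <= 0).
  { apply le_epsilon. intros eps He.
    set (t := Rmin (1/2) (Rmin (dl / (2 * M)) (eps / (2 * B0 * M + 1)))).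
    assert (Ht1 : t <= 1/2) by apply Rmin_l.
    assert (Ht2 : t <= dl / (2 * M)) by (eapply Rle_trans; [apply Rmin_r|apply Rmin_l]).
    assert (Ht3 : t <= eps / (2 * B0 * M + 1)) by (eapply Rle_trans; [apply Rmin_r|apply Rmin_r]).
    assert (Ht0 : 0 < t). { unfold t. repeat apply Rmin_glb_lt; try lra; apply Rdiv_lt_0_compat; nra. }
    assert (t * M < dl). { apply Rle_lt_trans with (dl / (2 * M) * M). nra. replace (dl / (2 * M) * M) with (dl / 2) by (field; lra). lra. }
    pose proof (Bd t ltac:(lra) H0).
    assert (t * (2 * B0 * M + 1) <= eps). { apply Rle_trans with (eps / (2 * B0 * M + 1) * (2 * B0 * M + 1)). apply Rmult_le_compat_r; nra. right; field; nra. }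
    nra. }
  apply Cmod_eq_0. pose proof (Cmod_ge_0 (Tri psi p u v)). lra. Qed.

Lemma prim_deriv psi a R0 p z : HolExc psi a R0 p -> inD a R0 z -> CD (fun w => SI psi p w) z (psi z).
Proof. intros H Hz. pose proof H as [Hp [Hcp Hd]]. apply CD_intro. intros eps He.
  destruct (HolExc_Cc psi a R0 p z H Hz eps He) as [d1 [Hd1 Hc1]].
  exists (Rmin d1 (R0 - Cmod (z - a))). split. apply Rmin_glb_lt; auto. unfold inD in Hz; lra.
  intros w Hw. pose proof (Rmin_l d1 (R0 - Cmod (z - a))). pose proof (Rmin_r d1 (R0 - Cmod (z - a))).
  assert (Iw : inD a R0 w).
  { unfold inD. replace (w - a)%C with ((w - z) + (z - a))%C by ceq. eapply Rle_lt_trans. apply Cmod_triangle. lra. }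
  assert (V := vertex psi a R0 p z w H Hz Iw). unfold Tri in V.
  rewrite (SI_rev psi p w) in V by (eapply HolExc_seg; eauto).
  assert (E : (SI psi p w - SI psi p z - psi z * (w - z))%C = SI (fun x => psi x - (psi z + RtoC 0 * x))%C z w).
  { rewrite SI_minus. rewrite SI_lin.
    transitivity (SI psi p z + SI psi z w + - SI psi p w + (SI psi p w - SI psi p z - psi z * (w - z)))%C. rewrite V; ceq. ceq.
    eapply HolExc_seg; eauto. intros t _. exact (CD_Cc _ _ _ (CD_lin _ _ _)). }
  rewrite E. apply SI_bound.
  - intros t Ht. apply Cc_minus. eapply HolExc_Cc; eauto. apply inD_seg; auto. exact (CD_Cc _ _ _ (CD_lin _ _ _)).
  - intros t Ht. replace (psi (z + RtoC t * (w - z)) - (psi z + RtoC 0 * (z + RtoC t * (w - z))))%C with (psi (z + RtoC t * (w - z)) - psi z)%C by ceq.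
    left. apply Hc1. replace (z + RtoC t * (w - z) - z)%C with (RtoC t * (w - z))%C by ceq.
    rewrite Cmod_mult, Cmod_R, Rabs_right by lra. pose proof (Cmod_ge_0 (w - z)%C). nra. Qed.

Lemma Ccont_RCc (g : R -> C) t : Ccont g t -> RCc g t.
Proof. intros H eps He.
  assert (HP : @locally C_UniformSpace (g t) (fun y => Cmod (y - g t) < eps)).
  { apply loc_C_intro. exists eps; split; auto. }
  specialize (H _ HP). destruct H as [d Hd]. exists d. split. apply cond_pos. intros s Hs. apply Hd. exact Hs. Qed.

Lemma RCc_mult (g h : R -> C) t : RCc g t -> RCc h t -> RCc (fun s => (g s * h s)%C) t.
Proof. intros Hg Hh eps He.
  set (A := Cmod (g t) + 1). set (B := Cmod (h t) + 1).
  assert (HA : 1 <= A) by (unfold A; pose proof (Cmod_ge_0 (g t)); lra).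
  assert (HB : 1 <= B) by (unfold B; pose proof (Cmod_ge_0 (h t)); lra).
  set (e := Rmin 1 (eps / (2 * (A + B)))).
  assert (He0 : 0 < e) by (unfold e; apply Rmin_glb_lt; [lra|apply Rdiv_lt_0_compat; lra]).
  assert (He1 : e <= 1) by apply Rmin_l. assert (He2 : e <= eps / (2 * (A + B))) by apply Rmin_r.
  destruct (Hg e He0) as [d1 [Hd1 K1]]. destruct (Hh e He0) as [d2 [Hd2 K2]].
  exists (Rmin d1 d2). split. apply Rmin_glb_lt; auto. intros s Hs.
  pose proof (Rmin_l d1 d2). pose proof (Rmin_r d1 d2).
  specialize (K1 s ltac:(lra)). specialize (K2 s ltac:(lra)).
  replace (g s * h s - g t * h t)%C with ((g s - g t) * h s + g t * (h s - h t))%C by ceq.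
  eapply Rle_lt_trans. apply Cmod_triangle. rewrite !Cmod_mult.
  assert (Cmod (h s) <= B).
  { replace (h s) with ((h s - h t) + h t)%C by ceq. eapply Rle_trans. apply Cmod_triangle. unfold B. lra. }
  pose proof (Cmod_ge_0 (g s - g t)%C). pose proof (Cmod_ge_0 (h s - h t)%C). pose proof (Cmod_ge_0 (g t)).
  apply Rle_lt_trans with (e * B + A * e). unfold A in *. nra.
  assert (e * (A + B) <= eps / 2). { apply Rle_trans with (eps / (2 * (A + B)) * (A + B)). apply Rmult_le_compat_r; lra. right; field; lra. }
  nra. Qed.

Definition RD (g : R -> C) (x : R) (l : C) := @is_derive R_AbsRing C_R_NormedModule g x l.

Lemma RD_RCc g x l : RD g x l -> RCc g x.
Proof. intros H. apply Ccont_RCc. exact (ex_derive_continuous (K:=R_AbsRing) (V:=C_R_NormedModule) g x (ex_intro _ l H)). Qed.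

Lemma chain_RC (F : C -> C) (g : R -> C) x l dg : CD F (g x) l -> RD g x dg -> RD (fun t => F (g t)) x (l * dg)%C.
Proof. intros HF Hg.
  assert (FD : @filterdiff R_AbsRing C_R_NormedModule C_R_NormedModule F (locally (g x)) (fun h => (l * h)%C)).
  { split.
    - apply Build_is_linear.
      + intros y z. change (l * (y + z) = (l * y) + (l * z))%C. ceq.
      + intros k y. rewrite !scal_R_Cmult. ceq.
      + exists (Cmod l + 1). split. pose proof (Cmod_ge_0 l); lra. intros y. rewrite !normCR, Cmod_mult.
        pose proof (Cmod_ge_0 y). nra.
    - intros y Hy. assert (E : g x = y) by exact (is_filter_lim_locally_unique (K:=R_AbsRing) (V:=C_R_NormedModule) _ _ Hy).
      subst y. intros [eps He]. apply loc_C_intro. destruct (CD_eps F (g x) l HF eps He) as [d [Hd K]].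
      exists d; split; auto. intros w Hw. simpl. rewrite !normCR.
      replace (minus (minus (F w) (F (g x))) (l * minus w (g x)))%C with (F w - F (g x) - l * (w - g x))%C.
      replace (minus w (g x)) with (w - g x)%C. apply K; auto.
      reflexivity. reflexivity. }
  pose proof (filterdiff_comp' g F x _ _ Hg FD) as K.
  unfold RD, is_derive. eapply filterdiff_ext_lin. exact K.
  intros y. simpl. rewrite !scal_R_Cmult. ceq. Qed.

Definition ex (t : R) : C := (cos t, sin t).
Definition gam (a : C) (r t : R) : C := (a + RtoC r * ex t)%C.

Lemma Cmod_ex t : Cmod (ex t) = 1.
Proof. unfold Cmod, ex. simpl fst; simpl snd. rewrite <- sqrt_1. f_equal. rewrite <- (sin2_cos2 t). unfold Rsqr. ring. Qed.

Lemma RD_gam a r t : RD (gam a r) t (RtoC r * (Ci * ex t))%C.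
Proof. unfold RD, gam.
  assert (D1 : is_derive (fun s => r * cos s) t (- r * sin t)) by (auto_derive; auto; ring).
  assert (D2 : is_derive (fun s => r * sin s) t (r * cos t)) by (auto_derive; auto; ring).
  pose proof (is_derive_scal_l (K:=R_AbsRing) (V:=C_R_NormedModule) _ t _ (RtoC 1) D1) as E1.
  pose proof (is_derive_scal_l (K:=R_AbsRing) (V:=C_R_NormedModule) _ t _ Ci D2) as E2.
  pose proof (is_derive_plus (K:=R_AbsRing) (V:=C_R_NormedModule) _ _ t _ _ E1 E2) as E3.
  pose proof (is_derive_plus (K:=R_AbsRing) (V:=C_R_NormedModule) _ _ t _ _ (is_derive_const (K:=R_AbsRing) (V:=C_R_NormedModule) a t) E3) as E4.
  replace (RtoC r * (Ci * ex t))%C with (@plus C_R_NormedModule zero (plus (scal (- r * sin t) (RtoC 1)) (scal (r * cos t) Ci))).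
  eapply is_derive_ext. 2: exact E4. intros s. simpl. rewrite !scal_R_Cmult. change (Cplus a (Cplus (RtoC (r * cos s) * RtoC 1) (RtoC (r * sin s) * Ci)) = (a + RtoC r * ex s)%C). unfold ex. ceq.
  rewrite !scal_R_Cmult. unfold ex. change (Cplus (RtoC 0) (Cplus (RtoC (- r * sin t) * RtoC 1) (RtoC (r * cos t) * Ci)) = (RtoC r * (Ci * (cos t, sin t)))%C). ceq. Qed.

Lemma RCc_ext g h t : (forall s, g s = h s) -> RCc g t -> RCc h t.
Proof. intros E H eps He. destruct (H eps He) as [d [Hd K]]. exists d; split; auto. intros s Hs. rewrite <- !E. auto. Qed.

Lemma RCc_const (c : C) t : RCc (fun _ => c) t.
Proof. intros eps He. exists 1. split. lra. intros. replace (c - c)%C with (RtoC 0) by ceq. rewrite Cmod_0. lra. Qed.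

Lemma ex_2PI : ex (2 * PI) = ex 0.
Proof. unfold ex. rewrite cos_2PI, sin_2PI, cos_0, sin_0. reflexivity. Qed.

Lemma inD_gam a R0 r t : 0 <= r < R0 -> inD a R0 (gam a r t).
Proof. intros Hr. unfold inD, gam. replace (a + RtoC r * ex t - a)%C with (RtoC r * ex t)%C by ceq.
  rewrite Cmod_mult, Cmod_ex, Cmod_R, Rabs_right; lra. Qed.

Lemma RCc_dgam r : forall t, RCc (fun s => RtoC r * (Ci * ex s))%C t.
Proof. intros t. apply RCc_ext with (g := fun s => (gam 0 r s * Ci)%C).
  intros s. unfold gam. ceq. apply RCc_mult. eapply RD_RCc. apply RD_gam. apply RCc_const. Qed.

Lemma cauchy_circle psi a R0 p r : HolExc psi a R0 p -> 0 < r < R0 ->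
  isCI (fun t => psi (gam a r t) * (RtoC r * (Ci * ex t)))%C 0 (2 * PI) (RtoC 0).
Proof. intros H Hr.
  set (f := fun t => SI psi p (gam a r t)).
  assert (FD : forall t, RD f t (psi (gam a r t) * (RtoC r * (Ci * ex t)))%C).
  { intros t. apply (chain_RC (fun w => SI psi p w) (gam a r)). apply (prim_deriv psi a R0 p). auto.
    apply inD_gam; lra. apply RD_gam. }
  assert (FC : forall t, RCc (fun t => psi (gam a r t) * (RtoC r * (Ci * ex t)))%C t).
  { intros t. apply RCc_mult. apply (RCc_comp (gam a r) psi). eapply RD_RCc; apply RD_gam.
    apply (HolExc_Cc psi a R0 p); auto. apply inD_gam; lra. apply RCc_dgam. }
  pose proof (is_RInt_derive (V:=C_R_CompleteNormedModule) f _ 0 (2 * PI) (fun t _ => FD t) (fun t _ => RCc_Ccont _ t (FC t))) as K.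
  unfold f in K. unfold gam in K. rewrite ex_2PI in K.
  replace (RtoC 0) with (@minus C_R_NormedModule (SI psi p (a + RtoC r * ex 0)) (SI psi p (a + RtoC r * ex 0))).
  exact K. change (Cplus (SI psi p (a + RtoC r * ex 0)) (Copp (SI psi p (a + RtoC r * ex 0))) = RtoC 0). ceq. Qed.

Lemma CD_ext_loc g h z l d : 0 < d -> (forall w, Cmod (w - z) < d -> g w = h w) -> CD g z l -> CD h z l.
Proof. intros Hd E H. apply CD_intro. intros eps He. destruct (CD_eps g z l H eps He) as [d1 [Hd1 K]].
  exists (Rmin d d1). split. apply Rmin_glb_lt; auto. intros w Hw.
  pose proof (Rmin_l d d1). pose proof (Rmin_r d d1).
  rewrite <- (E w) by lra. rewrite <- (E z). apply K; lra. replace (z - z)%C with (RtoC 0) by ceq. rewrite Cmod_0. lra. Qed.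

Lemma CD_minus_const f z l c : CD f z l -> CD (fun w => f w - c)%C z l.
Proof. intros H. apply CD_intro. intros eps He. destruct (CD_eps f z l H eps He) as [d [Hd K]].
  exists d; split; auto. intros w Hw. replace (f w - c - (f z - c) - l * (w - z))%C with (f w - f z - l * (w - z))%C by ceq. auto. Qed.

Lemma CD_mult f g z lf lg : CD f z lf -> CD g z lg -> CD (fun w => f w * g w)%C z (lf * g z + f z * lg)%C.
Proof. intros Hf Hg. apply CD_intro. intros eps He.
  set (S := Cmod (g z) + 1 + Cmod lf + Cmod (f z)).
  assert (HS : 1 <= S) by (unfold S; pose proof (Cmod_ge_0 (g z)); pose proof (Cmod_ge_0 lf); pose proof (Cmod_ge_0 (f z)); lra).
  set (e := Rmin 1 (eps / S)).
  assert (He0 : 0 < e) by (unfold e; apply Rmin_glb_lt; [lra|apply Rdiv_lt_0_compat; lra]).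
  assert (He1 : e <= 1) by apply Rmin_l. assert (He2 : e <= eps / S) by apply Rmin_r.
  destruct (CD_eps f z lf Hf e He0) as [d1 [Hd1 K1]]. destruct (CD_eps g z lg Hg e He0) as [d2 [Hd2 K2]].
  destruct (CD_Cc g z lg Hg e He0) as [d3 [Hd3 K3]].
  exists (Rmin d1 (Rmin d2 d3)). split. repeat apply Rmin_glb_lt; auto. intros w Hw.
  assert (W1 : Cmod (w - z) < d1) by (eapply Rlt_le_trans; [exact Hw|apply Rmin_l]).
  assert (W2 : Cmod (w - z) < d2) by (eapply Rlt_le_trans; [exact Hw|eapply Rle_trans; [apply Rmin_r|apply Rmin_l]]).
  assert (W3 : Cmod (w - z) < d3) by (eapply Rlt_le_trans; [exact Hw|eapply Rle_trans; [apply Rmin_r|apply Rmin_r]]).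
  specialize (K1 w W1). specialize (K2 w W2). specialize (K3 w W3).
  replace (f w * g w - f z * g z - (lf * g z + f z * lg) * (w - z))%C with
    ((f w - f z - lf * (w - z)) * g w + lf * (w - z) * (g w - g z) + f z * (g w - g z - lg * (w - z)))%C by ceq.
  assert (Gw : Cmod (g w) <= Cmod (g z) + 1).
  { replace (g w) with ((g w - g z) + g z)%C by ceq. eapply Rle_trans. apply Cmod_triangle. lra. }
  eapply Rle_trans. apply Cmod_triangle. eapply Rle_trans. apply Rplus_le_compat_r. apply Cmod_triangle.
  rewrite !Cmod_mult.
  pose proof (Cmod_ge_0 (w - z)%C). pose proof (Cmod_ge_0 lf). pose proof (Cmod_ge_0 (f z)).
  pose proof (Cmod_ge_0 (g w)). pose proof (Cmod_ge_0 (f w - f z - lf * (w - z))%C).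
  assert (A1 : Cmod (f w - f z - lf * (w - z)) * Cmod (g w) <= e * Cmod (w - z) * (Cmod (g z) + 1)) by nra.
  assert (A2 : Cmod lf * Cmod (w - z) * Cmod (g w - g z) <= Cmod lf * Cmod (w - z) * e) by (apply Rmult_le_compat_l; nra).
  assert (A3 : Cmod (f z) * Cmod (g w - g z - lg * (w - z)) <= Cmod (f z) * (e * Cmod (w - z))) by (apply Rmult_le_compat_l; nra).
  assert (e * S <= eps) by (apply Rle_trans with (eps / S * S); [apply Rmult_le_compat_r; lra| right; field; lra]).
  unfold S in *. nra. Qed.

Lemma CD_inv_lin (lam z : C) : z <> lam -> CD (fun w => / (w - lam))%C z (- / ((z - lam) * (z - lam)))%C.
Proof. intros Hz. assert (Hz' : (z - lam)%C <> RtoC 0) by (intros E; apply Hz; transitivity ((z - lam) + lam)%C; [ceq|rewrite E; ceq]).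
  set (m := Cmod (z - lam)). assert (Hm : 0 < m) by (apply Cmod_gt_0; auto).
  apply CD_intro. intros eps He. exists (Rmin (m / 2) (eps * m * m * m / 2)). split.
  apply Rmin_glb_lt; [lra|]. apply Rdiv_lt_0_compat; [|lra]. repeat apply Rmult_lt_0_compat; auto.
  intros w Hw. pose proof (Rmin_l (m / 2) (eps * m * m * m / 2)). pose proof (Rmin_r (m / 2) (eps * m * m * m / 2)).
  assert (Hwl : m / 2 <= Cmod (w - lam)).
  { pose proof (Cmod_triangle (z - w) (w - lam)) as T.
    replace ((z - w) + (w - lam))%C with (z - lam)%C in T by ceq. fold m in T.
    replace (z - w)%C with (- (w - z))%C in T by ceq. rewrite Cmod_opp in T. lra. }
  assert (Hw' : (w - lam)%C <> RtoC 0) by (intros E; rewrite E, Cmod_0 in Hwl; lra).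
  replace (/ (w - lam) - / (z - lam) - - / ((z - lam) * (z - lam)) * (w - z))%C with
    ((w - z) * (w - z) / ((w - lam) * ((z - lam) * (z - lam))))%C by (field; auto).
  unfold Cdiv. rewrite !Cmod_mult. rewrite Cmod_inv. 2: repeat apply Cmult_neq_0; auto.
  rewrite !Cmod_mult. fold m.
  pose proof (Cmod_ge_0 (w - z)%C).
  assert (0 < Cmod (w - lam)) by lra.
  apply Rle_trans with (Cmod (w - z) * Cmod (w - z) * / (m / 2 * (m * m))).
  apply Rmult_le_compat_l. nra. apply Rinv_le_contravar. repeat apply Rmult_lt_0_compat; lra.
  apply Rmult_le_compat_r. nra. auto.
  replace (Cmod (w - z) * Cmod (w - z) * / (m / 2 * (m * m))) with (Cmod (w - z) * (2 * Cmod (w - z) / (m * m * m))) by (field; lra).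
  rewrite Rmult_comm. apply Rmult_le_compat_r; auto.
  apply Rmult_le_reg_r with (m * m * m). repeat apply Rmult_lt_0_compat; auto.
  unfold Rdiv. rewrite Rmult_assoc, Rinv_l. 2: apply Rgt_not_eq; repeat apply Rmult_lt_0_compat; auto. lra. Qed.

Lemma RCc_inv h t : RCc h t -> h t <> RtoC 0 -> RCc (fun s => / h s)%C t.
Proof. intros H Hn eps He. set (m := Cmod (h t)). assert (Hm : 0 < m) by (apply Cmod_gt_0; auto).
  destruct (H (Rmin (m / 2) (eps * m * m / 2))) as [d [Hd K]].
  apply Rmin_glb_lt; [lra|]. apply Rdiv_lt_0_compat; [|lra]. repeat apply Rmult_lt_0_compat; auto.
  exists d; split; auto. intros s Hs. specialize (K s Hs).
  pose proof (Rmin_l (m / 2) (eps * m * m / 2)). pose proof (Rmin_r (m / 2) (eps * m * m / 2)).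
  assert (Hs2 : m / 2 <= Cmod (h s)).
  { pose proof (Cmod_triangle (h t - h s) (h s)) as T. replace (h t - h s + h s)%C with (h t) in T by ceq.
    replace (h t - h s)%C with (- (h s - h t))%C in T by ceq. rewrite Cmod_opp in T. fold m in T. lra. }
  assert (Hn' : h s <> RtoC 0) by (intros E; rewrite E, Cmod_0 in Hs2; lra).
  replace (/ h s - / h t)%C with ((h t - h s) / (h s * h t))%C by (field; auto).
  unfold Cdiv. rewrite Cmod_mult, Cmod_inv, Cmod_mult by (apply Cmult_neq_0; auto). fold m.
  replace (h t - h s)%C with (- (h s - h t))%C by ceq. rewrite Cmod_opp.
  apply Rle_lt_trans with (Cmod (h s - h t) * / (m / 2 * m)).
  apply Rmult_le_compat_l. apply Cmod_ge_0. apply Rinv_le_contravar. nra. apply Rmult_le_compat_r; lra.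
  apply Rmult_lt_reg_r with (m / 2 * m). nra. rewrite Rmult_assoc, Rinv_l by nra. nra. Qed.

Lemma ex_mult s t : (ex s * ex t)%C = ex (s + t).
Proof. unfold ex. rewrite cos_plus, sin_plus. apply Ceq2; simpl; ring. Qed.

Lemma ex_pow t n : Cpow (ex t) n = ex (INR n * t).
Proof. induction n. simpl. unfold ex. rewrite Rmult_0_l, cos_0, sin_0. reflexivity.
  rewrite Cpow_S, IHn, ex_mult. f_equal. rewrite S_INR. ring. Qed.

Lemma RD_mult_const g x l K : RD g x l -> RD (fun t => g t * K)%C x (l * K)%C.
Proof. intros H. pose proof (chain_RC (fun w => RtoC 0 + K * w)%C g x K l (CD_lin _ _ _) H) as E.
  eapply is_derive_ext. 2: { replace (l * K)%C with (K * l)%C by ceq. exact E. } intros t. simpl. ceq. Qed.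

Lemma RD_exlin c t : RD (fun s => ex (c * s)) t (RtoC c * Ci * ex (c * t))%C.
Proof. pose proof (RD_gam 0 1 (c * t)) as E.
  assert (Dl : RD (fun s => RtoC (c * s)) t (RtoC c)).
  { unfold RD. assert (D := is_derive_scal_l (K:=R_AbsRing) (V:=C_R_NormedModule) (fun s => c * s) t c (RtoC 1) ltac:(auto_derive; auto; ring)).
    eapply is_derive_ext. 2: { replace (RtoC c) with (@scal R_AbsRing C_R_NormedModule c (RtoC 1)). exact D. rewrite scal_R_Cmult; ceq. }
    intros s. simpl. rewrite scal_R_Cmult. ceq. }
  assert (E2 : forall s, ex (c * s) = (gam 0 1 (c * s) - 0)%C) by (intros; unfold gam; ceq).
  unfold RD in *. eapply is_derive_ext. intros s. rewrite (E2 s). reflexivity.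
  pose proof (is_derive_comp (K:=R_AbsRing) (V:=C_R_NormedModule) (fun y => gam 0 1 y) (fun s => c * s) t _ c E ltac:(auto_derive; auto; ring)) as F.
  eapply is_derive_ext. 2: { replace (RtoC c * Ci * ex (c * t))%C with (@scal R_AbsRing C_R_NormedModule c (RtoC 1 * (Ci * ex (c * t)))%C). exact F. rewrite scal_R_Cmult; ceq. }
  intros s. simpl. unfold gam. ceq. Qed.

Lemma ex_per k : ex (- INR k * (2 * PI)) = ex 0.
Proof. unfold ex. replace (- INR k * (2 * PI)) with (- (0 + 2 * INR k * PI)) by ring.
  rewrite cos_neg, sin_neg, cos_period, sin_period, cos_0, sin_0. f_equal. ring. Qed.

Lemma int_ex k : (1 <= k)%nat -> isCI (fun t => ex (- INR k * t)) 0 (2 * PI) (RtoC 0).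
Proof. intros Hk. set (c := - INR k).
  assert (Hc : c <> 0). { unfold c. apply Ropp_neq_0_compat. apply not_0_INR. lia. }
  assert (HcC : (RtoC c * Ci)%C <> RtoC 0). { apply Cmult_neq_0. intros E. apply Hc. apply (f_equal fst) in E. exact E. exact Ci_nz. }
  set (G := fun t => (ex (c * t) * / (RtoC c * Ci))%C).
  assert (GD : forall t, RD G t (ex (c * t))).
  { intros t. pose proof (RD_mult_const _ t _ (/ (RtoC c * Ci))%C (RD_exlin c t)) as E.
    replace (ex (c * t)) with (RtoC c * Ci * ex (c * t) * / (RtoC c * Ci))%C. exact E. field. split; [exact Ci_nz | intros E0; apply Hc; apply (f_equal fst) in E0; exact E0]. }
  assert (GC : forall t, RCc (fun t => ex (c * t)) t) by (intros t; eapply RD_RCc; apply RD_exlin).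
  pose proof (is_RInt_derive (V:=C_R_CompleteNormedModule) G _ 0 (2 * PI) (fun t _ => GD t) (fun t _ => RCc_Ccont _ t (GC t))) as K.
  replace (RtoC 0) with (@minus C_R_NormedModule (G (2 * PI)) (G 0)). exact K.
  unfold G. unfold c. rewrite ex_per. rewrite Rmult_0_r.
  change (Cplus (ex 0 * / (RtoC (- INR k) * Ci)) (Copp (ex 0 * / (RtoC (- INR k) * Ci))) = RtoC 0)%C. ceq. Qed.

Fixpoint gsum (x : C) (n : nat) : C := match n with O => RtoC 0 | S m => (gsum x m + Cpow x m)%C end.

Lemma gsum_id x n : ((RtoC 1 - x) * gsum x n)%C = (RtoC 1 - Cpow x n)%C.
Proof. induction n. simpl. ceq. simpl gsum. rewrite Cpow_S.
  replace ((RtoC 1 - x) * (gsum x n + Cpow x n))%C with ((RtoC 1 - x) * gsum x n + (RtoC 1 - x) * Cpow x n)%C by ceq.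
  rewrite IHn. ceq. Qed.

Lemma int_gsum q n : isCI (fun t => gsum (q * ex (- t)) (S n))%C 0 (2 * PI) (RtoC (2 * PI)).
Proof. induction n.
  - replace (RtoC (2 * PI)) with (RtoC (2 * PI - 0) * RtoC 1)%C by ceq.
    eapply isCI_ext. 2: apply (isCI_const 0 (2 * PI) (RtoC 1)). intros; simpl; ceq.
  - simpl gsum. simpl gsum in IHn.
    assert (P1 : isCI (fun t => Cpow (q * ex (- t)) (S n))%C 0 (2 * PI) (Cpow q (S n) * RtoC 0)%C).
    { eapply isCI_ext. 2: apply (isCI_mult_l _ _ _ (Cpow q (S n)) _ (int_ex (S n) ltac:(lia))).
      intros t _. rewrite Cpow_mult_l, ex_pow. f_equal. f_equal. ring. }
    replace (RtoC (2 * PI)) with (RtoC (2 * PI) + Cpow q (S n) * RtoC 0)%C by ceq.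
    pose proof (isCI_plus _ _ _ _ _ _ IHn P1) as K. eapply isCI_ext. 2: exact K. intros; simpl. ceq.
Qed.

Lemma Cmod_1_minus (x : C) : 1 - Cmod x <= Cmod (RtoC 1 - x).
Proof. pose proof (Cmod_triangle (RtoC 1 - x) x). replace (RtoC 1 - x + x)%C with (RtoC 1) in H by ceq.
  rewrite Cmod_1 in H. lra. Qed.

Lemma J_val a r lam : 0 < r -> Cmod (lam - a) < r ->
  isCI (fun t => RtoC r * (Ci * ex t) / (gam a r t - lam))%C 0 (2 * PI) (RtoC (2 * PI) * Ci)%C.
Proof. intros Hr Hl.
  set (q := ((lam - a) / RtoC r)%C).
  assert (HrC : RtoC r <> RtoC 0) by (intros E; apply (f_equal fst) in E; simpl in E; lra).
  assert (Hq : Cmod q < 1). { unfold q. rewrite Cmod_div by auto. rewrite Cmod_R, Rabs_right by lra.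
    apply Rmult_lt_reg_r with r; auto. unfold Rdiv. rewrite Rmult_assoc, Rinv_l by lra. lra. }
  set (x := fun t => (q * ex (- t))%C).
  assert (Hx : forall t, Cmod (x t) = Cmod q) by (intros; unfold x; rewrite Cmod_mult, Cmod_ex; ring).
  assert (H1x : forall t, (RtoC 1 - x t)%C <> RtoC 0).
  { intros t E. pose proof (Cmod_1_minus (x t)). rewrite E, Cmod_0, Hx in H. lra. }
  assert (Hg0 : forall t, (gam a r t - lam)%C <> RtoC 0).
  { intros t E. assert (Cmod (gam a r t - a) = r).
    { unfold gam. replace (a + RtoC r * ex t - a)%C with (RtoC r * ex t)%C by ceq. rewrite Cmod_mult, Cmod_ex, Cmod_R, Rabs_right; lra. }
    replace (gam a r t - a)%C with ((gam a r t - lam) + (lam - a))%C in H by ceq. rewrite E in H.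
    replace (RtoC 0 + (lam - a))%C with (lam - a)%C in H by ceq. lra. }
  assert (Hex : forall t, (ex t * ex (- t))%C = RtoC 1) by (intros; rewrite ex_mult; replace (t + - t) with 0 by ring; unfold ex; rewrite cos_0, sin_0; reflexivity).
  assert (Hexnz : forall t, ex t <> RtoC 0) by (intros t E; pose proof (Cmod_ex t); rewrite E, Cmod_0 in H; lra).
  assert (S1 : forall t, (RtoC r * (Ci * ex t) / (gam a r t - lam))%C = (Ci / (RtoC 1 - x t))%C).
  { intros t. assert (E : (gam a r t - lam)%C = (RtoC r * ex t * (RtoC 1 - x t))%C).
    { unfold gam, x. replace (RtoC r * ex t * (RtoC 1 - q * ex (- t)))%C with (RtoC r * ex t - RtoC r * q * (ex t * ex (- t)))%C by ceq.
      rewrite Hex. unfold q. field. auto. }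
    rewrite E. field. repeat split; auto. }
  assert (S2 : forall t n, (Ci / (RtoC 1 - x t))%C = (Ci * gsum (x t) n + Ci * Cpow (x t) n / (RtoC 1 - x t))%C).
  { intros t n. pose proof (gsum_id (x t) n) as G.
    assert (E : gsum (x t) n = ((RtoC 1 - Cpow (x t) n) / (RtoC 1 - x t))%C).
    { rewrite <- G. field. auto. }
    rewrite E. field. auto. }
  assert (GC : forall t, RCc (fun t => RtoC r * (Ci * ex t) / (gam a r t - lam))%C t).
  { intros t. apply RCc_mult. apply RCc_dgam. apply RCc_inv. 
    apply (RCc_ext (fun s => (gam a r s + - lam)%C)). intros; reflexivity.
    apply (RCc_comp (gam a r) (fun w => w + - lam)%C). eapply RD_RCc; apply RD_gam.
    exact (CD_Cc _ _ _ (CD_minus_const (fun w => w) _ (RtoC 1) lam ltac:(apply (CD_ext_loc (fun w => RtoC 0 + RtoC 1 * w)%C) with 1; [lra| intros; ceq| apply CD_lin]))).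
    auto. }
  pose proof (isCI_cont _ 0 (2 * PI) (fun t _ => RCc_Ccont _ t (GC t))) as K.
  set (Jv := RInt _ 0 (2 * PI)) in K.
  assert (B : forall n, Cmod (Jv - RtoC (2 * PI) * Ci) <= Cmod q ^ (S n) / (1 - Cmod q) * (2 * PI - 0)).
  { intros n. apply (isCI_norm (fun t => RtoC r * (Ci * ex t) / (gam a r t - lam) - Ci * gsum (x t) (S n))%C).
    pose proof PI_RGT_0; lra.
    - intros t Ht. rewrite S1, (S2 t (S n)).
      replace (Ci * gsum (x t) (S n) + Ci * Cpow (x t) (S n) / (RtoC 1 - x t) - Ci * gsum (x t) (S n))%C with (Ci * (Cpow (x t) (S n) / (RtoC 1 - x t)))%C by ceq.
      rewrite Cmod_mult, Cmod_Ci, Rmult_1_l, Cmod_div by auto. rewrite Cmod_pow, Hx.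
      pose proof (Cmod_1_minus (x t)). rewrite Hx in H. pose proof (Cmod_ge_0 q).
      apply Rmult_le_compat_l. apply pow_le; auto. apply Rinv_le_contravar; lra.
    - replace (Jv - RtoC (2 * PI) * Ci)%C with (Jv - Ci * RtoC (2 * PI))%C by ceq.
      apply isCI_minus; auto. apply isCI_mult_l. apply int_gsum. }
  assert (Cmod (Jv - RtoC (2 * PI) * Ci) <= 0).
  { apply le_epsilon. intros eps He. pose proof (Cmod_ge_0 q).
    destruct (pow_lt_1_zero (Cmod q) ltac:(rewrite Rabs_right; lra) (eps * (1 - Cmod q) / (2 * PI))) as [N HN].
    apply Rdiv_lt_0_compat. apply Rmult_lt_0_compat; lra. pose proof PI_RGT_0; lra.
    specialize (HN (S N) ltac:(lia)). rewrite Rabs_right in HN by (apply Rle_ge, pow_le; auto).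
    specialize (B N). pose proof PI_RGT_0.
    assert (Cmod q ^ S N / (1 - Cmod q) * (2 * PI - 0) < eps).
    { apply Rmult_lt_reg_r with ((1 - Cmod q) / (2 * PI)). apply Rdiv_lt_0_compat; lra.
      replace (Cmod q ^ S N / (1 - Cmod q) * (2 * PI - 0) * ((1 - Cmod q) / (2 * PI))) with (Cmod q ^ S N) by (field; lra).
      replace (eps * ((1 - Cmod q) / (2 * PI))) with (eps * (1 - Cmod q) / (2 * PI)) by (field; lra). exact HN. }
    lra. }
  replace (RtoC (2 * PI) * Ci)%C with Jv. exact K.
  assert (Cmod (Jv - RtoC (2 * PI) * Ci) = 0) by (pose proof (Cmod_ge_0 (Jv - RtoC (2 * PI) * Ci)); lra).
  apply Cmod_eq_0 in H0. transitivity ((Jv - RtoC (2 * PI) * Ci) + RtoC (2 * PI) * Ci)%C. ceq. rewrite H0. ceq. Qed.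

Definition Hol (f : C -> C) a R0 := forall z, inD a R0 z -> exists l, CD f z l.

Lemma gam_neq a r lam t : 0 < r -> Cmod (lam - a) < r -> (gam a r t - lam)%C <> RtoC 0.
Proof. intros Hr Hl E. assert (Cmod (gam a r t - a) = r).
  { unfold gam. replace (a + RtoC r * ex t - a)%C with (RtoC r * ex t)%C by ceq. rewrite Cmod_mult, Cmod_ex, Cmod_R, Rabs_right; lra. }
  replace (gam a r t - a)%C with ((gam a r t - lam) + (lam - a))%C in H by ceq. rewrite E in H.
  replace (RtoC 0 + (lam - a))%C with (lam - a)%C in H by ceq. lra. Qed.

Lemma cauchy_formula f a R0 r lam : Hol f a R0 -> 0 < r < R0 -> Cmod (lam - a) < r ->
  isCI (fun t => f (gam a r t) * (RtoC r * (Ci * ex t)) / (gam a r t - lam))%C 0 (2 * PI) (RtoC (2 * PI) * Ci * f lam)%C.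
Proof. intros Hf Hr Hl.
  assert (Il : inD a R0 lam) by (unfold inD; lra).
  destruct (Hf lam Il) as [l0 Hl0].
  set (psi := fun z => if Ceq_dec z lam then l0 else ((f z - f lam) / (z - lam))%C).
  assert (HE : HolExc psi a R0 lam).
  { split; [auto|split].
    - intros eps He. destruct (CD_eps f lam l0 Hl0 (eps / 2) ltac:(lra)) as [d [Hd K]].
      exists d; split; auto. intros w Hw. unfold psi. destruct (Ceq_dec lam lam) as [_|N]; [|congruence].
      destruct (Ceq_dec w lam) as [->|N].
      + replace (l0 - l0)%C with (RtoC 0) by ceq. rewrite Cmod_0. lra.
      + assert (Nz : (w - lam)%C <> RtoC 0) by (intros E; apply N; transitivity ((w - lam) + lam)%C; [ceq|rewrite E; ceq]).
        replace ((f w - f lam) / (w - lam) - l0)%C with ((f w - f lam - l0 * (w - lam)) / (w - lam))%C by (field; auto).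
        rewrite Cmod_div by auto. specialize (K w Hw). pose proof (Cmod_gt_0 (w - lam)%C) as [G _]. specialize (G Nz).
        apply Rle_lt_trans with (eps / 2). apply Rmult_le_reg_r with (Cmod (w - lam)); auto.
        unfold Rdiv. rewrite Rmult_assoc, Rinv_l by lra. lra. lra.
    - intros z Hz Nz. destruct (Hf z Hz) as [lz Hlz].
      eexists. apply (CD_ext_loc (fun w => (f w - f lam) * / (w - lam))%C psi z _ (Cmod (z - lam))).
      apply Cmod_gt_0. intros E; apply Nz; transitivity ((z - lam) + lam)%C; [ceq|rewrite E; ceq].
      intros w Hw. unfold psi. destruct (Ceq_dec w lam) as [->|N].
      + replace (z - lam)%C with (- (lam - z))%C in Hw by ceq. rewrite Cmod_opp in Hw. lra.
      + reflexivity.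
      + apply CD_mult. apply CD_minus_const. exact Hlz. apply CD_inv_lin. exact Nz. }
  pose proof (cauchy_circle psi a R0 lam r HE Hr) as C1.
  pose proof (isCI_mult_l _ _ _ (f lam) _ (J_val a r lam ltac:(lra) Hl)) as C2.
  pose proof (isCI_plus _ _ _ _ _ _ C1 C2) as C3.
  replace (RtoC (2 * PI) * Ci * f lam)%C with (RtoC 0 + f lam * (RtoC (2 * PI) * Ci))%C by ceq.
  eapply isCI_ext. 2: exact C3. intros t _. simpl.
  pose proof (gam_neq a r lam t ltac:(lra) Hl) as Ng.
  unfold psi. destruct (Ceq_dec (gam a r t) lam) as [E|_].
  - exfalso. apply Ng. rewrite E. ceq.
  - field. auto. Qed.

Lemma circle_bound F X B : isCI F 0 (2 * PI) (RtoC (2 * PI) * Ci * X)%C -> (forall t, 0 <= t <= 2 * PI -> Cmod (F t) <= B) -> Cmod X <= B.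
Proof. intros H HB. pose proof PI_RGT_0. pose proof (isCI_norm F 0 (2 * PI) _ B ltac:(lra) HB H) as N.
  rewrite !Cmod_mult, Cmod_Ci, Cmod_R, Rabs_right in N by lra. nra. Qed.

Lemma gam_far a r mu t : Cmod (gam a r t - mu) >= r - Cmod (mu - a) /\ Cmod (gam a r t - a) = Rabs r.
Proof. assert (E : Cmod (gam a r t - a) = Rabs r).
  { unfold gam. replace (a + RtoC r * ex t - a)%C with (RtoC r * ex t)%C by ceq. rewrite Cmod_mult, Cmod_ex, Cmod_R; ring. }
  split; auto. pose proof (Cmod_triangle (gam a r t - mu) (mu - a)). replace (gam a r t - mu + (mu - a))%C with (gam a r t - a)%C in H by ceq.
  pose proof (Rle_abs r). lra. Qed.

Lemma Cmod_dgam r t : 0 <= r -> Cmod (RtoC r * (Ci * ex t)) = r.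
Proof. intros. rewrite !Cmod_mult, Cmod_Ci, Cmod_ex, Cmod_R, Rabs_right; lra. Qed.

Lemma est_diff f a R0 r M mu : Hol f a R0 -> 0 < r < R0 -> (forall t, Cmod (f (gam a r t)) <= M) -> Cmod (mu - a) <= r / 2 ->
  Cmod (f mu - f a) <= 2 * M * Cmod (mu - a) / r.
Proof. intros Hf Hr HM Hmu.
  pose proof (cauchy_formula f a R0 r mu Hf Hr ltac:(lra)) as I1.
  pose proof (cauchy_formula f a R0 r a Hf Hr ltac:(replace (a - a)%C with (RtoC 0) by ceq; rewrite Cmod_0; lra)) as I2.
  pose proof (isCI_minus _ _ _ _ _ _ I1 I2) as I3.
  replace (RtoC (2 * PI) * Ci * f mu - RtoC (2 * PI) * Ci * f a)%C with (RtoC (2 * PI) * Ci * (f mu - f a))%C in I3 by ceq.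
  apply (circle_bound _ _ _ I3).
  intros t Ht. 
  pose proof (gam_neq a r mu t ltac:(lra) ltac:(lra)) as N1.
  pose proof (gam_neq a r a t ltac:(lra) ltac:(replace (a - a)%C with (RtoC 0) by ceq; rewrite Cmod_0; lra)) as N2.
  replace (f (gam a r t) * (RtoC r * (Ci * ex t)) / (gam a r t - mu) - f (gam a r t) * (RtoC r * (Ci * ex t)) / (gam a r t - a))%C
    with (f (gam a r t) * (RtoC r * (Ci * ex t)) * (mu - a) / ((gam a r t - mu) * (gam a r t - a)))%C by (field; auto).
  destruct (gam_far a r mu t) as [F1 _]. destruct (gam_far a r a t) as [_ F2]. rewrite Rabs_right in F2 by lra.
  unfold Cdiv. rewrite !Cmod_mult, Cmod_inv, Cmod_mult by (apply Cmult_neq_0; auto).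
  rewrite Cmod_Ci, Cmod_ex, Cmod_R, Rabs_right by lra. rewrite F2.
  set (A := Cmod (f (gam a r t))). set (D := Cmod (mu - a)). set (G1 := Cmod (gam a r t - mu)).
  assert (HA : A <= M) by apply HM. assert (0 <= A) by apply Cmod_ge_0. assert (0 <= D) by apply Cmod_ge_0.
  assert (HG : r / 2 <= G1) by (unfold G1, D in *; lra).
  replace (A * (r * (1 * 1)) * D * / (G1 * r)) with (A * D / G1) by (field; lra).
  apply Rle_trans with (M * D / (r / 2)).
  - unfold Rdiv. apply Rmult_le_compat. nra. apply Rlt_le, Rinv_0_lt_compat; lra. nra. apply Rinv_le_contravar; lra.
  - right. field. lra. Qed.

Lemma est_taylor0 f a R0 r M lam mu : Hol f a R0 -> 0 < r < R0 -> (forall t, Cmod (f (gam a r t)) <= M) ->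
  Cmod (lam - a) <= r / 2 -> Cmod (mu - a) <= r / 2 -> mu <> a ->
  Cmod (f lam - f a - (lam - a) * ((f mu - f a) / (mu - a))) <= 4 * M * Cmod (lam - a) * Cmod (lam - mu) / (r * r).
Proof. intros Hf Hr HM Hl Hmu Nmu.
  assert (Ha : Cmod (a - a) < r) by (replace (a - a)%C with (RtoC 0) by ceq; rewrite Cmod_0; lra).
  assert (Nma : (mu - a)%C <> RtoC 0) by (intros E; apply Nmu; transitivity ((mu - a) + a)%C; [ceq|rewrite E; ceq]).
  pose proof (cauchy_formula f a R0 r lam Hf Hr ltac:(lra)) as I1.
  pose proof (cauchy_formula f a R0 r a Hf Hr Ha) as I2.
  pose proof (cauchy_formula f a R0 r mu Hf Hr ltac:(lra)) as I3.
  set (c := ((lam - a) / (mu - a))%C).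
  pose proof (isCI_minus _ _ _ _ _ _ (isCI_minus _ _ _ _ _ _ I1 I2) (isCI_mult_l _ _ _ c _ (isCI_minus _ _ _ _ _ _ I3 I2))) as I4.
  replace (RtoC (2 * PI) * Ci * f lam - RtoC (2 * PI) * Ci * f a - c * (RtoC (2 * PI) * Ci * f mu - RtoC (2 * PI) * Ci * f a))%C
    with (RtoC (2 * PI) * Ci * (f lam - f a - (lam - a) * ((f mu - f a) / (mu - a))))%C in I4 by (unfold c; field; auto).
  apply (circle_bound _ _ _ I4).
  intros t Ht.
  pose proof (gam_neq a r lam t ltac:(lra) ltac:(lra)) as N1.
  pose proof (gam_neq a r a t ltac:(lra) Ha) as N2.
  pose proof (gam_neq a r mu t ltac:(lra) ltac:(lra)) as N3.
  set (g := gam a r t) in *. set (dg := (RtoC r * (Ci * ex t))%C).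
  replace (f g * dg / (g - lam) - f g * dg / (g - a) - c * (f g * dg / (g - mu) - f g * dg / (g - a)))%C
    with (f g * dg * ((lam - a) * (lam - mu)) / ((g - a) * (g - lam) * (g - mu)))%C by (unfold c; field; auto).
  destruct (gam_far a r lam t) as [F1 _]. destruct (gam_far a r mu t) as [F3 _]. destruct (gam_far a r a t) as [_ F2].
  rewrite Rabs_right in F2 by lra. fold g in F1, F2, F3.
  unfold Cdiv. rewrite !Cmod_mult, Cmod_inv by (repeat apply Cmult_neq_0; auto). rewrite !Cmod_mult.
  unfold dg. rewrite !Cmod_mult, Cmod_Ci, Cmod_ex, Cmod_R, Rabs_right by lra. rewrite F2.
  set (A := Cmod (f g)). set (D1 := Cmod (lam - a)). set (D2 := Cmod (lam - mu)).
  set (G1 := Cmod (g - lam)). set (G3 := Cmod (g - mu)).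
  assert (HA : A <= M) by apply HM. assert (0 <= A) by apply Cmod_ge_0.
  assert (0 <= D1) by apply Cmod_ge_0. assert (0 <= D2) by apply Cmod_ge_0.
  assert (HG1 : r / 2 <= G1) by (unfold G1, D1 in *; lra). assert (HG3 : r / 2 <= G3) by (unfold G3 in *; lra).
  replace (A * (r * (1 * 1)) * (D1 * D2) * / (r * G1 * G3)) with (A * (D1 * D2) / (G1 * G3)) by (field; lra).
  apply Rle_trans with (M * (D1 * D2) / (r / 2 * (r / 2))).
  - assert (0 < r / 2 * (r / 2)) by nra. assert (r / 2 * (r / 2) <= G1 * G3) by nra.
    assert (0 <= A * (D1 * D2)) by (apply Rmult_le_pos; nra).
    unfold Rdiv. apply Rmult_le_compat; auto. apply Rlt_le, Rinv_0_lt_compat; nra.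
    apply Rmult_le_compat_r; nra. apply Rinv_le_contravar; auto.
  - right. field. lra. Qed.

Lemma est_taylor f a R0 r M l lam : Hol f a R0 -> 0 < r < R0 -> (forall t, Cmod (f (gam a r t)) <= M) -> CD f a l ->
  Cmod (lam - a) <= r / 2 ->
  Cmod (f lam - f a - l * (lam - a)) <= 4 * M * Cmod (lam - a) * Cmod (lam - a) / (r * r) /\ Cmod l <= 2 * M / r.
Proof. intros Hf Hr HM Hl Hlam.
  assert (M0 : 0 <= M) by (pose proof (HM 0); pose proof (Cmod_ge_0 (f (gam a r 0))); lra).
  set (D := Cmod (lam - a)). assert (HD : 0 <= D) by apply Cmod_ge_0.
  assert (Gen : forall eps, 0 < eps -> exists mu, mu <> a /\ Cmod (mu - a) <= r / 2 /\ Cmod (mu - a) <= eps /\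
     Cmod ((f mu - f a) / (mu - a) - l) <= eps).
  { intros eps He. destruct (CD_eps f a l Hl eps He) as [d [Hd K]].
    set (eta := Rmin (d / 2) (Rmin (r / 2) eps)).
    assert (He1 : eta <= d / 2) by apply Rmin_l.
    assert (He2 : eta <= r / 2) by (eapply Rle_trans; [apply Rmin_r|apply Rmin_l]).
    assert (He3 : eta <= eps) by (eapply Rle_trans; [apply Rmin_r|apply Rmin_r]).
    assert (He0 : 0 < eta) by (unfold eta; repeat apply Rmin_glb_lt; lra).
    exists (a + RtoC eta)%C.
    assert (Em : Cmod (a + RtoC eta - a) = eta) by (replace (a + RtoC eta - a)%C with (RtoC eta) by ceq; rewrite Cmod_R, Rabs_right; lra).
    assert (Nz : (a + RtoC eta - a)%C <> RtoC 0) by (intros E; rewrite E, Cmod_0 in Em; lra).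
    split. intros E. rewrite E in Em. replace (a - a)%C with (RtoC 0) in Em by ceq. rewrite Cmod_0 in Em. lra.
    split. lra. split. lra.
    replace ((f (a + RtoC eta) - f a) / (a + RtoC eta - a) - l)%C with ((f (a + RtoC eta) - f a - l * (a + RtoC eta - a)) / (a + RtoC eta - a))%C by (field; auto).
    rewrite Cmod_div by auto. rewrite Em. specialize (K (a + RtoC eta)%C ltac:(lra)). rewrite Em in K.
    apply Rmult_le_reg_r with eta; auto. unfold Rdiv. rewrite Rmult_assoc, Rinv_l by lra. lra. }
  split.
  - apply le_epsilon. intros eps He.
    set (S := 4 * M * D / (r * r) + D + 1).
    assert (HS : 1 <= S). { unfold S. assert (0 <= 4 * M * D / (r * r)). apply Rmult_le_pos. nra. apply Rlt_le, Rinv_0_lt_compat; nra. lra. }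
    destruct (Gen (eps / S) ltac:(apply Rdiv_lt_0_compat; lra)) as [mu [Nmu [H1 [H2 H3]]]].
    pose proof (est_taylor0 f a R0 r M lam mu Hf Hr HM Hlam H1 Nmu) as T.
    set (Q := ((f mu - f a) / (mu - a))%C) in *.
    replace (f lam - f a - l * (lam - a))%C with ((f lam - f a - (lam - a) * Q) + (lam - a) * (Q - l))%C by ceq.
    eapply Rle_trans. apply Cmod_triangle. rewrite Cmod_mult. fold D. fold D in T.
    assert (Cmod (lam - mu) <= D + Cmod (mu - a)).
    { replace (lam - mu)%C with ((lam - a) + - (mu - a))%C by ceq. eapply Rle_trans. apply Cmod_triangle. rewrite Cmod_opp. fold D; lra. }
    assert (4 * M * D * Cmod (lam - mu) / (r * r) <= 4 * M * D * D / (r * r) + 4 * M * D / (r * r) * (eps / S)).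
    { unfold Rdiv. assert (0 <= / (r * r)) by (apply Rlt_le, Rinv_0_lt_compat; nra).
      assert (0 <= 4 * M * D) by nra. 
      replace (4 * M * D * D * / (r * r) + 4 * M * D * / (r * r) * (eps * / S)) with (4 * M * D * (D + eps / S) * / (r * r)) by (field; lra).
      apply Rmult_le_compat_r; auto. apply Rmult_le_compat_l; auto. unfold Rdiv in *. lra. }
    assert (D * Cmod (Q - l) <= D * (eps / S)) by (apply Rmult_le_compat_l; auto).
    assert ((4 * M * D / (r * r) + D) * (eps / S) <= eps).
    { apply Rle_trans with (S * (eps / S)). apply Rmult_le_compat_r. apply Rlt_le, Rdiv_lt_0_compat; lra. unfold S; lra. right; field; lra. }
    nra.
  - apply le_epsilon. intros eps He.
    destruct (Gen eps He) as [mu [Nmu [H1 [H2 H3]]]].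
    pose proof (est_diff f a R0 r M mu Hf Hr HM H1) as T.
    assert (Nz : (mu - a)%C <> RtoC 0) by (intros E; apply Nmu; transitivity ((mu - a) + a)%C; [ceq|rewrite E; ceq]).
    assert (Cmod ((f mu - f a) / (mu - a)) <= 2 * M / r).
    { rewrite Cmod_div by auto. pose proof (Cmod_gt_0 (mu - a)%C) as [G _]. specialize (G Nz).
      apply Rmult_le_reg_r with (Cmod (mu - a)); auto. unfold Rdiv at 1. rewrite Rmult_assoc, Rinv_l by lra.
      replace (2 * M / r * Cmod (mu - a)) with (2 * M * Cmod (mu - a) / r) by (field; lra). lra. }
    replace l with ((f mu - f a) / (mu - a) - ((f mu - f a) / (mu - a) - l))%C by ceq.
    eapply Rle_trans. apply Cmod_triangle. rewrite Cmod_opp. lra. Qed.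

Definition C2 := prod_NormedModule C_AbsRing C_NormedModule C_NormedModule.
Definition FD (g : C * C -> C) (z : C * C) (L : C * C -> C) :=
  @filterdiff C_AbsRing C2 C_NormedModule g (@locally (prod_UniformSpace C_UniformSpace C_UniformSpace) z) L.
Definition aff (p d : C * C) (lam : C) : C * C := ((fst p + lam * fst d)%C, (snd p + lam * snd d)%C).

Lemma aff_FD p d lam0 : @filterdiff C_AbsRing (AbsRing_NormedModule C_AbsRing) C2 (aff p d) (locally lam0) (fun y => @scal C_AbsRing C2 y d).
Proof.
  pose proof (is_derive_scal_l (K:=C_AbsRing) (V:=C2) (fun x => x) lam0 one d (is_derive_id lam0)) as D1.
  pose proof (is_derive_plus (K:=C_AbsRing) (V:=C2) _ _ lam0 _ _ (is_derive_const (K:=C_AbsRing) (V:=C2) p lam0) D1) as D2.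
  unfold is_derive in D2. eapply filterdiff_ext_lin. eapply filterdiff_ext. 2: exact D2.
  intros y. destruct p as [p1 p2], d as [d1 d2]. unfold aff. simpl. reflexivity.
  intros y. destruct d as [d1 d2]. apply injective_projections; simpl; unfold prod_scal, prod_plus, prod_zero; simpl;
  unfold scal, plus, zero, mult, one; simpl; unfold mult; simpl; ceq.
Qed.

Lemma line_CD g p d lam0 L : FD g (aff p d lam0) L -> CD (fun lam => g (aff p d lam)) lam0 (L d).
Proof. intros H. pose proof (filterdiff_comp' (K:=C_AbsRing) (U:=AbsRing_NormedModule C_AbsRing) (V:=C2) (W:=C_NormedModule)
    (aff p d) g lam0 _ L (aff_FD p d lam0) H) as K.
  unfold CD, is_derive. eapply filterdiff_ext_lin. exact K.
  intros y. simpl. rewrite (linear_scal L (proj1 H)). reflexivity. Qed.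

Lemma L_decomp L d : @is_linear C_AbsRing C2 C_NormedModule L -> L d = (fst d * L (RtoC 1, RtoC 0) + snd d * L (RtoC 0, RtoC 1))%C.
Proof. intros H. 
  assert (E : d = @plus C2 (@scal C_AbsRing C2 (fst d) (RtoC 1, RtoC 0)) (@scal C_AbsRing C2 (snd d) (RtoC 0, RtoC 1))).
  { destruct d as [d1 d2]. apply injective_projections; simpl; unfold prod_scal, prod_plus; simpl;
    unfold scal, plus, mult; simpl; unfold mult; simpl; ceq. }
  rewrite E at 1. rewrite (linear_plus L H), !(linear_scal L H). simpl. unfold scal, plus, mult; simpl; unfold mult; simpl.
  destruct d; simpl. reflexivity. Qed.

Lemma slice0_CD g w L : FD g w L -> CD (fun lam => g (lam, snd w)) (fst w) (L (RtoC 1, RtoC 0)).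
Proof. intros H. assert (E : aff (RtoC 0, snd w) (RtoC 1, RtoC 0) (fst w) = w).
  { destruct w; unfold aff; simpl. f_equal; ceq. }
  rewrite <- E in H. pose proof (line_CD g _ _ _ _ H) as K.
  apply (CD_ext_loc (fun lam => g (aff (RtoC 0, snd w) (RtoC 1, RtoC 0) lam)) _ _ _ 1 ltac:(lra)); auto.
  intros x _. unfold aff; simpl. f_equal. f_equal; ceq. Qed.

Lemma slice1_CD g w L : FD g w L -> CD (fun lam => g (fst w, lam)) (snd w) (L (RtoC 0, RtoC 1)).
Proof. intros H. assert (E : aff (fst w, RtoC 0) (RtoC 0, RtoC 1) (snd w) = w).
  { destruct w; unfold aff; simpl. f_equal; ceq. }
  rewrite <- E in H. pose proof (line_CD g _ _ _ _ H) as K.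
  apply (CD_ext_loc (fun lam => g (aff (fst w, RtoC 0) (RtoC 0, RtoC 1) lam)) _ _ _ 1 ltac:(lra)); auto.
  intros x _. unfold aff; simpl. f_equal. f_equal; ceq. Qed.

Lemma IZR_pos_INR p : IZR (Zpos p) = INR (Pos.to_nat p).
Proof. rewrite INR_IZR_INZ. f_equal. lia. Qed.

Lemma per_gen {X : Type} (F : R -> X) T : 0 < T -> (forall x, F (x + T) = F x) -> forall x, exists y, 0 <= y <= T /\ F y = F x.
Proof. intros HT HF.
  assert (Pn : forall n x, F (x + INR n * T) = F x).
  { induction n; intros x. simpl. rewrite Rmult_0_l, Rplus_0_r. auto.
    rewrite S_INR. replace (x + (INR n + 1) * T) with ((x + INR n * T) + T) by ring. rewrite HF. auto. }
  assert (Mn : forall n x, F (x - INR n * T) = F x).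
  { intros n x. rewrite <- (Pn n (x - INR n * T)). f_equal. ring. }
  assert (Zk : forall k x, F (x - IZR k * T) = F x).
  { intros k x. destruct k.
    - simpl. rewrite Rmult_0_l, Rminus_0_r. auto.
    - rewrite IZR_pos_INR. apply Mn.
    - rewrite IZR_NEG, IZR_pos_INR. replace (x - - INR (Pos.to_nat p) * T) with (x + INR (Pos.to_nat p) * T) by ring. apply Pn. }
  intros x. set (k := Int_part (x / T)). destruct (base_Int_part (x / T)) as [B1 B2]. fold k in B1, B2.
  exists (x - IZR k * T). split. 2: apply Zk.
  assert (IZR k * T <= x / T * T) by (apply Rmult_le_compat_r; lra).
  assert (x / T * T = x) by (field; lra).
  assert (x / T * T < (IZR k + 1) * T) by (apply Rmult_lt_compat_r; lra).
  split; nra. Qed.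

Definition toC2 (t : Compactness.Tn 4 R) : C * C :=
  let '(x0, (x1, (x2, (x3, _)))) := t in ((x0, x1), (x2, x3)).
Definition ofC2 (z : C * C) : Compactness.Tn 4 R :=
  (fst (fst z), (snd (fst z), (fst (snd z), (snd (snd z), tt)))).

Lemma g_cont gr g R0 z : ext_of R0 gr g -> inWcl R0 z -> exists d, 0 < d /\ forall y,
  Rabs (fst (fst y) - fst (fst z)) < d -> Rabs (snd (fst y) - snd (fst z)) < d ->
  Rabs (fst (snd y) - fst (snd z)) < d -> Rabs (snd (snd y) - snd (snd z)) < d -> Cmod (g y - g z) < 1.
Proof. intros [[U [HUo [HSU HUd]]] _] Hz.
  pose proof (filterdiff_continuous g z (HUd z (HSU z Hz))) as Hc.
  assert (HP : @locally C_UniformSpace (g z) (fun y => Cmod (y - g z) < 1)) by (apply loc_C_intro; exists 1; split; [lra|auto]).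
  specialize (Hc _ HP). destruct Hc as [d Hd]. exists d. split. apply cond_pos.
  intros y H1 H2 H3 H4. apply Hd. split; split; assumption. Qed.

Lemma Rabs_fold_max (f : Compactness.Tn 4 R -> R) l t : List.In t l -> f t <= List.fold_right Rmax 0 (List.map f l).
Proof. induction l; simpl. tauto. intros [->|H]. apply Rmax_l. eapply Rle_trans. apply IHl; auto. apply Rmax_r. Qed.

Lemma g_bounded_box gr g R0 : 0 < R0 -> ext_of R0 gr g -> exists G, forall z,
  0 <= fst (fst z) <= 2 * PI -> - R0 <= snd (fst z) <= R0 -> 0 <= fst (snd z) <= 2 * PI -> - R0 <= snd (snd z) <= R0 ->
  Cmod (g z) <= G.
Proof. intros HR Hext.
  set (P := fun (t : Compactness.Tn 4 R) (d : posreal) => forall y,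
    Rabs (fst (fst y) - fst (fst (toC2 t))) < d -> Rabs (snd (fst y) - snd (fst (toC2 t))) < d ->
    Rabs (fst (snd y) - fst (snd (toC2 t))) < d -> Rabs (snd (snd y) - snd (snd (toC2 t))) < d -> Cmod (g y - g (toC2 t)) < 1).
  set (delta := fun t => epsilon (inhabits (mkposreal 1 Rlt_0_1)) (P t)).
  set (a := (0, (- R0, (0, (- R0, tt)))) : Compactness.Tn 4 R).
  set (b := (2 * PI, (R0, (2 * PI, (R0, tt)))) : Compactness.Tn 4 R).
  assert (Hd : forall t, bounded_n 4 a b t -> P t (delta t)).
  { intros t Ht. unfold delta. apply epsilon_spec.
    destruct t as [x0 [x1 [x2 [x3 []]]]]. simpl in Ht. destruct Ht as [B0 [B1 [B2 [B3 _]]]].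
    destruct (g_cont gr g R0 (toC2 (x0, (x1, (x2, (x3, tt)))))) as [d [Hd0 Hd1]]; auto.
    { unfold inWcl, toC2, Im; simpl. split; unfold Rabs; destruct Rcase_abs; lra. }
    exists (mkposreal d Hd0). exact Hd1. }
  apply NNPP. intros Hn. apply (compactness_list 4 a b delta). intros [l Hl]. apply Hn.
  exists (List.fold_right Rmax 0 (List.map (fun t => Cmod (g (toC2 t))) l) + 1).
  intros z Z1 Z2 Z3 Z4. destruct (Hl (ofC2 z)) as [t [Ht1 [Ht2 Ht3]]].
  { unfold ofC2; simpl. destruct Z1, Z2, Z3, Z4. repeat split; auto. }
  pose proof (Hd t Ht2 z) as K. destruct t as [x0 [x1 [x2 [x3 []]]]]. simpl in Ht3.
  destruct Ht3 as [C0' [C1' [C2' [C3' _]]]].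
  specialize (K C0' C1' C2' C3').
  pose proof (Rabs_fold_max (fun t => Cmod (g (toC2 t))) l _ Ht1) as Mx. simpl in Mx.
  replace (g z) with ((g z - g (toC2 (x0, (x1, (x2, (x3, tt)))))) + g (toC2 (x0, (x1, (x2, (x3, tt))))))%C by ceq.
  eapply Rle_trans. apply Cmod_triangle. rewrite Rplus_comm. apply Rplus_le_compat. exact Mx. left. exact K. Qed.

Lemma g_bounded gr g R0 : 0 < R0 -> ext_of R0 gr g -> exists G, 0 <= G /\ forall z, inWcl R0 z -> Cmod (g z) <= G.
Proof. intros HR Hext. destruct (g_bounded_box gr g R0 HR Hext) as [G0 HG0].
  pose proof Hext as [_ [_ Hper]].
  exists (Rmax G0 0). split. apply Rmax_r.
  intros [[a0 b0] [a1 b1]] Hz. unfold inWcl, Im in Hz; simpl in Hz. destruct Hz as [Hb0 Hb1].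
  assert (Iw : forall x y, inWcl R0 ((x, b0), (y, b1))) by (intros; unfold inWcl, Im; simpl; auto).
  assert (PI0 := PI_RGT_0).
  destruct (per_gen (fun x => g ((x, b0), (a1, b1))) (2 * PI) ltac:(lra)) with (x := a0) as [y0 [Hy0 E0]].
  { intros x. destruct (Hper _ (Iw x a1)) as [P1 _]. rewrite <- P1. unfold cadd2, rpt. simpl. f_equal. f_equal; apply Ceq2; simpl; ring. }
  destruct (per_gen (fun x => g ((y0, b0), (x, b1))) (2 * PI) ltac:(lra)) with (x := a1) as [y1 [Hy1 E1]].
  { intros x. destruct (Hper _ (Iw y0 x)) as [_ P2]. rewrite <- P2. unfold cadd2, rpt. simpl. f_equal. f_equal; apply Ceq2; simpl; ring. }
  simpl in E0, E1.
  assert (B : Cmod (g ((y0, b0), (y1, b1))) <= G0).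
  { apply HG0; simpl. lra. unfold Rabs in Hb0; destruct Rcase_abs in Hb0; lra. lra. unfold Rabs in Hb1; destruct Rcase_abs in Hb1; lra. }
  rewrite E1, E0 in B. eapply Rle_trans. exact B. apply Rmax_l. Qed.

Lemma CD_const (c z : C) : CD (fun _ => c) z (RtoC 0).
Proof. apply CD_intro. intros eps He. exists 1. split. lra. intros w _.
  replace (c - c - RtoC 0 * (w - z))%C with (RtoC 0) by ceq. rewrite Cmod_0. pose proof (Cmod_ge_0 (w - z)%C). nra. Qed.

Lemma CD_plus f g z lf lg : CD f z lf -> CD g z lg -> CD (fun w => f w + g w)%C z (lf + lg)%C.
Proof. intros Hf Hg. apply CD_intro. intros eps He.
  destruct (CD_eps f z lf Hf (eps / 2) ltac:(lra)) as [d1 [Hd1 K1]].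
  destruct (CD_eps g z lg Hg (eps / 2) ltac:(lra)) as [d2 [Hd2 K2]].
  exists (Rmin d1 d2). split. apply Rmin_glb_lt; auto. intros w Hw.
  pose proof (Rmin_l d1 d2). pose proof (Rmin_r d1 d2).
  specialize (K1 w ltac:(lra)). specialize (K2 w ltac:(lra)).
  replace (f w + g w - (f z + g z) - (lf + lg) * (w - z))%C with ((f w - f z - lf * (w - z)) + (g w - g z - lg * (w - z)))%C by ceq.
  eapply Rle_trans. apply Cmod_triangle. lra. Qed.

Lemma CD_mulc f z l c : CD f z l -> CD (fun w => f w * c)%C z (l * c)%C.
Proof. intros H. pose proof (CD_mult f (fun _ => c) z l (RtoC 0) H (CD_const c z)) as K.
  replace (l * c)%C with (l * c + f z * RtoC 0)%C by ceq. exact K. Qed.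

Lemma pd0_eq g w L : FD g w L -> pd0 g w = L (RtoC 1, RtoC 0).
Proof. intros H. pose proof (slice0_CD g w L H) as K. unfold pd0.
  assert (Ex : exists l, is_derive (K:=C_AbsRing) (V:=C_NormedModule) (fun w0 => g (w0, snd w)) (fst w) l) by (eexists; exact K).
  pose proof (epsilon_spec (inhabits (RtoC 0)) _ Ex) as E.
  exact (CD_unique _ _ _ _ E K). Qed.

Lemma pd1_eq g w L : FD g w L -> pd1 g w = L (RtoC 0, RtoC 1).
Proof. intros H. pose proof (slice1_CD g w L H) as K. unfold pd1.
  assert (Ex : exists l, is_derive (K:=C_AbsRing) (V:=C_NormedModule) (fun w0 => g (fst w, w0)) (snd w) l) by (eexists; exact K).
  pose proof (epsilon_spec (inhabits (RtoC 0)) _ Ex) as E.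
  exact (CD_unique _ _ _ _ E K). Qed.

Lemma FD_ex gr g R0 z : ext_of R0 gr g -> inWcl R0 z -> exists L, FD g z L.
Proof. intros [[U [HUo [HSU HUd]]] _] Hz. exact (HUd z (HSU z Hz)). Qed.

Lemma line_CD_pd g w d L : FD g w L -> CD (fun lam => g (aff w d lam)) (RtoC 0) (fst d * pd0 g w + snd d * pd1 g w)%C.
Proof. intros H. assert (E : aff w d (RtoC 0) = w) by (destruct w; unfold aff; simpl; f_equal; ceq).
  assert (K : CD (fun lam => g (aff w d lam)) (RtoC 0) (L d)) by (apply line_CD; rewrite E; exact H).
  replace (fst d * pd0 g w + snd d * pd1 g w)%C with (L d). exact K.
  rewrite (pd0_eq g w L H), (pd1_eq g w L H). exact (L_decomp L d (proj1 H)). Qed.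

Lemma Im_le (x : C) : Rabs (Im x) <= Cmod x.
Proof. apply Cmod_snd_le. Qed.

Lemma inWcl_near R0 bs w0 w1 lam : Rabs (Im w0) < bs -> Rabs (Im w1) <= R0 -> Cmod (lam - w0) < R0 - bs -> inWcl R0 (lam, w1).
Proof. intros H0 H1 H2. unfold inWcl; simpl. split; auto.
  pose proof (Im_le (lam - w0)%C). replace (Im (lam - w0)%C) with (Im lam - Im w0) in H by (unfold Im; simpl; ring).
  pose proof (Rabs_triang_inv (Im lam) (Im w0)). lra. Qed.

Lemma inWcl_near1 R0 bs w0 w1 lam : Rabs (Im w1) < bs -> Rabs (Im w0) <= R0 -> Cmod (lam - w1) < R0 - bs -> inWcl R0 (w0, lam).
Proof. intros H0 H1 H2. unfold inWcl; simpl. split; auto.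
  pose proof (Im_le (lam - w1)%C). replace (Im (lam - w1)%C) with (Im lam - Im w1) in H by (unfold Im; simpl; ring).
  pose proof (Rabs_triang_inv (Im lam) (Im w1)). lra. Qed.

Lemma pd_bound gr g R0 G bs w : 0 < bs < R0 -> ext_of R0 gr g -> (forall z, inWcl R0 z -> Cmod (g z) <= G) ->
  Rabs (Im (fst w)) < bs -> Rabs (Im (snd w)) < bs ->
  Cmod (pd0 g w) <= 4 * G / (R0 - bs) /\ Cmod (pd1 g w) <= 4 * G / (R0 - bs).
Proof. intros Hb Hext HG H0 H1. set (m := R0 - bs). assert (Hm : 0 < m) by (unfold m; lra).
  assert (Hgam : forall a r t, 0 <= r -> Cmod (gam a r t - a) = r).
  { intros a r t Hr. unfold gam. replace (a + RtoC r * ex t - a)%C with (RtoC r * ex t)%C by ceq.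
    rewrite Cmod_mult, Cmod_ex, Cmod_R, Rabs_right; lra. }
  split.
  - set (f := fun lam => g (lam, snd w)).
    assert (Hf : Hol f (fst w) m).
    { intros lam Hl. unfold inD in Hl. destruct (FD_ex gr g R0 (lam, snd w) Hext) as [L HL].
      apply (inWcl_near R0 bs (fst w)); auto. lra. exists (L (RtoC 1, RtoC 0)). exact (slice0_CD g (lam, snd w) L HL). }
    destruct (FD_ex gr g R0 w Hext) as [L HL]. { unfold inWcl; split; lra. }
    pose proof (slice0_CD g w L HL) as K. rewrite <- (pd0_eq g w L HL) in K.
    destruct (est_taylor f (fst w) m (m / 2) G (pd0 g w) (fst w) Hf ltac:(lra)) as [_ E]; auto.
    + intros t. unfold f. apply HG. apply (inWcl_near R0 bs (fst w)); auto. lra. rewrite Hgam; unfold m in *; lra.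
    + replace (fst w - fst w)%C with (RtoC 0) by ceq. rewrite Cmod_0. lra.
    + replace (4 * G / m) with (2 * G / (m / 2)) by (field; lra). exact E.
  - set (f := fun lam => g (fst w, lam)).
    assert (Hf : Hol f (snd w) m).
    { intros lam Hl. unfold inD in Hl. destruct (FD_ex gr g R0 (fst w, lam) Hext) as [L HL].
      apply (inWcl_near1 R0 bs _ (snd w)); auto. lra. exists (L (RtoC 0, RtoC 1)). exact (slice1_CD g (fst w, lam) L HL). }
    destruct (FD_ex gr g R0 w Hext) as [L HL]. { unfold inWcl; split; lra. }
    pose proof (slice1_CD g w L HL) as K. rewrite <- (pd1_eq g w L HL) in K.
    destruct (est_taylor f (snd w) m (m / 2) G (pd1 g w) (snd w) Hf ltac:(lra)) as [_ E]; auto.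
    + intros t. unfold f. apply HG. apply (inWcl_near1 R0 bs _ (snd w)); auto. lra. rewrite Hgam; unfold m in *; lra.
    + replace (snd w - snd w)%C with (RtoC 0) by ceq. rewrite Cmod_0. lra.
    + replace (4 * G / m) with (2 * G / (m / 2)) by (field; lra). exact E.
Qed.

Lemma dist2piZ_val t : 0 <= t < 2 * PI -> dist2piZ t = Rmin t (2 * PI - t).
Proof. intros Ht. unfold dist2piZ. pose proof PI_RGT_0.
  rewrite (is_glb_Rbar_unique _ (Finite (Rmin t (2 * PI - t)))). reflexivity.
  split.
  - intros x [k ->]. simpl. destruct (Z_le_gt_dec k 0) as [Hk|Hk].
    + apply IZR_le in Hk. apply Rle_trans with t. apply Rmin_l.
      rewrite Rabs_right by nra. nra.
    + assert (1 <= IZR k) by (apply IZR_le; lia). apply Rle_trans with (2 * PI - t). apply Rmin_r.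
      rewrite Rabs_left1 by nra. nra.
  - intros bb Hb. destruct (Rle_dec t (2 * PI - t)).
    + rewrite Rmin_left by auto. apply Hb. exists 0%Z. rewrite Rmult_0_r, Rminus_0_r, Rabs_right; lra.
    + rewrite Rmin_right by lra. apply Hb. exists 1%Z. rewrite Rabs_left1; simpl; lra. Qed.

Definition rep (t : R) := if Rle_dec t PI then t else t - 2 * PI.

Lemma rep_props t : 0 <= t < 2 * PI -> rep t ^ 2 = dist2piZ t ^ 2 /\ (t - rep t = 0 \/ t - rep t = 2 * PI) /\ Rabs (rep t) <= PI.
Proof. intros Ht. rewrite dist2piZ_val by auto. unfold rep. pose proof PI_RGT_0. destruct (Rle_dec t PI).
  - rewrite Rmin_left by lra. split; [reflexivity|]. split. left; ring. rewrite Rabs_right; lra.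
  - rewrite Rmin_right by lra. split. ring. split. right; ring. rewrite Rabs_left1; lra. Qed.

Lemma zeta_sq t s : 0 <= t < 2 * PI -> 0 <= s < 2 * PI -> zeta t s ^ 2 = rep t ^ 2 + rep s ^ 2 /\ zeta t s = sqrt (rep t ^ 2 + rep s ^ 2).
Proof. intros Ht Hs. destruct (rep_props t Ht) as [E1 _]. destruct (rep_props s Hs) as [E2 _].
  unfold zeta. rewrite <- E1, <- E2. split; auto. rewrite pow2_sqrt; auto. nra. Qed.

Lemma per_shift gr g R0 z0 z1 k l : ext_of R0 gr g -> inWcl R0 (z0, z1) -> (k = 0 \/ k = 2 * PI) -> (l = 0 \/ l = 2 * PI) ->
  g ((z0 + RtoC k)%C, (z1 + RtoC l)%C) = g (z0, z1).
Proof. intros [_ [_ Hper]] Hz Hk Hl.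
  assert (E0 : forall a b : C, inWcl R0 (a, b) -> g ((a + RtoC (2 * PI))%C, b) = g (a, b)).
  { intros a b Hab. destruct (Hper _ Hab) as [P _]. rewrite <- P. unfold cadd2, rpt. simpl. f_equal. f_equal. ceq. }
  assert (E1 : forall a b : C, inWcl R0 (a, b) -> g (a, (b + RtoC (2 * PI))%C) = g (a, b)).
  { intros a b Hab. destruct (Hper _ Hab) as [_ P]. rewrite <- P. unfold cadd2, rpt. simpl. f_equal. f_equal. ceq. }
  assert (Z0 : forall a : C, (a + RtoC 0)%C = a) by (intros; ceq).
  assert (I1 : inWcl R0 (z0, (z1 + RtoC l)%C)).
  { unfold inWcl in *; simpl in *. destruct Hz. split; auto. unfold Im in *. simpl. rewrite Rplus_0_r. auto. }
  destruct Hk as [->| ->]; destruct Hl as [->| ->]; rewrite ?Z0.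
  - reflexivity.
  - apply E1; auto.
  - apply E0; auto.
  - rewrite E0 by auto. apply E1; auto. Qed.

Definition hfun (g0 g1 g2 : C * C -> C) w d (N0 N1 N2 : C) (lam : C) : C :=
  ((g0 (aff w d lam) - g0 w) * N0 + (g1 (aff w d lam) - g1 w) * N1 + (g2 (aff w d lam) - g2 w) * N2)%C.

Lemma hfun_CD g0 g1 g2 w d N0 N1 N2 lam L0 L1 L2 :
  FD g0 (aff w d lam) L0 -> FD g1 (aff w d lam) L1 -> FD g2 (aff w d lam) L2 ->
  CD (hfun g0 g1 g2 w d N0 N1 N2) lam (L0 d * N0 + L1 d * N1 + L2 d * N2)%C.
Proof. intros H0 H1 H2. unfold hfun.
  apply CD_plus. apply CD_plus.
  all: apply CD_mulc; apply CD_minus_const; apply line_CD; auto. Qed.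

Lemma hfun_CD0 g0 g1 g2 w d lam0 L0 L1 L2 : lam0 = RtoC 0 -> FD g0 w L0 -> FD g1 w L1 -> FD g2 w L2 ->
  let P0 := pd0 g0 w in let P1 := pd0 g1 w in let P2 := pd0 g2 w in
  let Q0 := pd1 g0 w in let Q1 := pd1 g1 w in let Q2 := pd1 g2 w in
  CD (hfun g0 g1 g2 w d (P1 * Q2 - P2 * Q1) (P2 * Q0 - P0 * Q2) (P0 * Q1 - P1 * Q0))%C lam0 (RtoC 0).
Proof. intros -> H0 H1 H2. intros. unfold hfun.
  pose proof (line_CD_pd g0 w d L0 H0) as K0. pose proof (line_CD_pd g1 w d L1 H1) as K1. pose proof (line_CD_pd g2 w d L2 H2) as K2.
  pose proof (CD_plus _ _ _ _ _ (CD_plus _ _ _ _ _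
    (CD_mulc _ _ _ (P1 * Q2 - P2 * Q1)%C (CD_minus_const _ _ _ (g0 w) K0))
    (CD_mulc _ _ _ (P2 * Q0 - P0 * Q2)%C (CD_minus_const _ _ _ (g1 w) K1)))
    (CD_mulc _ _ _ (P0 * Q1 - P1 * Q0)%C (CD_minus_const _ _ _ (g2 w) K2))) as K.
  assert (E : ((fst d * pd0 g0 w + snd d * pd1 g0 w) * (P1 * Q2 - P2 * Q1) +
            (fst d * pd0 g1 w + snd d * pd1 g1 w) * (P2 * Q0 - P0 * Q2) +
            (fst d * pd0 g2 w + snd d * pd1 g2 w) * (P0 * Q1 - P1 * Q0))%C = RtoC 0).
  { unfold P0, P1, P2, Q0, Q1, Q2. ceq. }
  rewrite E in K. exact K. Qed.

Lemma hfun_bound g0 g1 g2 w d N0 N1 N2 lam G : Cmod (g0 (aff w d lam)) <= G -> Cmod (g1 (aff w d lam)) <= G -> Cmod (g2 (aff w d lam)) <= G ->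
  Cmod (g0 w) <= G -> Cmod (g1 w) <= G -> Cmod (g2 w) <= G ->
  Cmod (hfun g0 g1 g2 w d N0 N1 N2 lam) <= 2 * G * (Cmod N0 + Cmod N1 + Cmod N2).
Proof. intros. unfold hfun.
  assert (Bj : forall a b N, Cmod a <= G -> Cmod b <= G -> Cmod ((a - b) * N) <= 2 * G * Cmod N).
  { intros a b N Ha Hb. rewrite Cmod_mult. apply Rmult_le_compat_r. apply Cmod_ge_0.
    replace (a - b)%C with (a + - b)%C by ceq. eapply Rle_trans. apply Cmod_triangle. rewrite Cmod_opp. lra. }
  eapply Rle_trans. apply Cmod_triangle. eapply Rle_trans. apply Rplus_le_compat_r. apply Cmod_triangle.
  pose proof (Bj _ _ N0 H H2). pose proof (Bj _ _ N1 H0 H3). pose proof (Bj _ _ N2 H1 H4). lra. Qed.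

Lemma aff_inWcl R0 bs w t' s' Z lam : Rabs (Im (fst w)) < bs -> Rabs (Im (snd w)) < bs -> Rabs t' <= Z -> Rabs s' <= Z ->
  Z * Cmod lam <= R0 - bs -> inWcl R0 (aff w (RtoC (- t'), RtoC (- s')) lam).
Proof. intros H0 H1 Ht Hs HZ. unfold inWcl, aff, Im; simpl.
  pose proof (Cmod_snd_le lam) as Hl. pose proof (Cmod_ge_0 lam).
  assert (Rabs t' * Rabs (snd lam) <= Z * Cmod lam) by (apply Rmult_le_compat; auto; apply Rabs_pos).
  assert (Rabs s' * Rabs (snd lam) <= Z * Cmod lam) by (apply Rmult_le_compat; auto; apply Rabs_pos).
  unfold Im in H0, H1.
  split.
  - replace (snd (fst w) + (fst lam * 0 + snd lam * - t')) with (snd (fst w) - snd lam * t') by ring.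
    eapply Rle_trans. apply Rabs_triang. rewrite Rabs_Ropp, Rabs_mult. lra.
  - replace (snd (snd w) + (fst lam * 0 + snd lam * - s')) with (snd (snd w) - snd lam * s') by ring.
    eapply Rle_trans. apply Rabs_triang. rewrite Rabs_Ropp, Rabs_mult. lra. Qed.

Lemma N_bound (P1 P2 Q1 Q2 : C) D : Cmod P1 <= D -> Cmod P2 <= D -> Cmod Q1 <= D -> Cmod Q2 <= D ->
  Cmod (P1 * Q2 - P2 * Q1) <= 2 * (D * D).
Proof. intros. replace (P1 * Q2 - P2 * Q1)%C with (P1 * Q2 + - (P2 * Q1))%C by ceq.
  eapply Rle_trans. apply Cmod_triangle. rewrite Cmod_opp, !Cmod_mult.
  pose proof (Cmod_ge_0 P1). pose proof (Cmod_ge_0 P2). pose proof (Cmod_ge_0 Q1). pose proof (Cmod_ge_0 Q2).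
  assert (Cmod P1 * Cmod Q2 <= D * D) by (apply Rmult_le_compat; auto).
  assert (Cmod P2 * Cmod Q1 <= D * D) by (apply Rmult_le_compat; auto). lra. Qed.

Theorem lemma3 (gr0 gr1 gr2 : R -> R -> R) (g0 g1 g2 : C * C -> C) (C0 R0 b : R) :
  biperiodic gr0 -> biperiodic gr1 -> biperiodic gr2 ->
  (* (A1) *)
  0 < C0 ->
  (forall t s t' s', inI t -> inI s -> inI t' -> inI s' ->
     rdist3 gr0 gr1 gr2 t s t' s' >= C0 * zeta (t - t') (s - s')) ->
  (* (A2) *)
  0 < R0 -> ext_of R0 gr0 g0 -> ext_of R0 gr1 g1 -> ext_of R0 gr2 g2 ->
  (* choice of b *)
  0 < b -> b < bmax C0 R0 g0 g1 g2 ->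
  exists c : R, 0 < c /\
    forall (z : C * C) (t s : R), inW (bstar b C0 R0 g0 g1 g2) z -> inI t -> inI s ->
      let w := cadd2 z (rpt t s) in
      Cmod (cdot3 (csub3 (Gam g0 g1 g2 z) (Gam g0 g1 g2 w))
                  (ccross3 (dGam0 g0 g1 g2 w) (dGam1 g0 g1 g2 w)))
        <= c * (zeta t s) ^ 2.
Proof.
  intros _ _ _ _ _ HR0 E0 E1 E2 Hb Hbm.
  set (bs := bstar b C0 R0 g0 g1 g2).
  assert (Hbs : 0 < bs < R0 / 2).
  { unfold bs, bstar. unfold bmax in *.
    pose proof (Rmin_r (C0 ^ 2 / (sqrt 2 * M0 R0 g0 g1 g2 * M1 R0 g0 g1 g2)) (R0 / 2)). lra. }
  destruct (g_bounded gr0 g0 R0 HR0 E0) as [G0 [HG0 B0]].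
  destruct (g_bounded gr1 g1 R0 HR0 E1) as [G1 [HG1 B1]].
  destruct (g_bounded gr2 g2 R0 HR0 E2) as [G2 [HG2 B2]].
  set (G := G0 + G1 + G2). assert (HG : 0 <= G) by (unfold G; lra).
  assert (Bg0 : forall z, inWcl R0 z -> Cmod (g0 z) <= G) by (intros z Hz; specialize (B0 z Hz); unfold G; lra).
  assert (Bg1 : forall z, inWcl R0 z -> Cmod (g1 z) <= G) by (intros z Hz; specialize (B1 z Hz); unfold G; lra).
  assert (Bg2 : forall z, inWcl R0 z -> Cmod (g2 z) <= G) by (intros z Hz; specialize (B2 z Hz); unfold G; lra).
  set (m := R0 - bs). assert (Hm : R0 / 2 < m) by (unfold m; lra).
  set (D1 := 4 * G / m). assert (HD1 : 0 <= D1) by (unfold D1; apply Rdiv_le_0_compat; lra).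
  set (c := 32 * G * (6 * (D1 * D1)) / (m * m) + 1).
  assert (Hc0 : 0 <= 32 * G * (6 * (D1 * D1)) / (m * m)) by (apply Rdiv_le_0_compat; [|nra]; apply Rmult_le_pos; nra).
  exists c. split. unfold c; lra.
  intros [z0 z1] t s Hz Ht Hs w.
  destruct Hz as [Hz0 Hz1]. simpl in Hz0, Hz1. fold bs in Hz0, Hz1.
  assert (Hw0 : Rabs (Im (fst w)) < bs) by (unfold w, cadd2, rpt, Im; simpl; rewrite Rplus_0_r; exact Hz0).
  assert (Hw1 : Rabs (Im (snd w)) < bs) by (unfold w, cadd2, rpt, Im; simpl; rewrite Rplus_0_r; exact Hz1).
  assert (Iw : inWcl R0 w) by (unfold inWcl; split; lra).
  assert (Iz : inWcl R0 (z0, z1)) by (unfold inWcl; simpl; split; lra).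
  destruct (pd_bound gr0 g0 R0 G bs w ltac:(lra) E0 Bg0 Hw0 Hw1) as [BP0 BQ0].
  destruct (pd_bound gr1 g1 R0 G bs w ltac:(lra) E1 Bg1 Hw0 Hw1) as [BP1 BQ1].
  destruct (pd_bound gr2 g2 R0 G bs w ltac:(lra) E2 Bg2 Hw0 Hw1) as [BP2 BQ2].
  fold m in BP0, BQ0, BP1, BQ1, BP2, BQ2. fold D1 in BP0, BQ0, BP1, BQ1, BP2, BQ2.
  set (P0 := pd0 g0 w) in *. set (P1 := pd0 g1 w) in *. set (P2 := pd0 g2 w) in *.
  set (Q0 := pd1 g0 w) in *. set (Q1 := pd1 g1 w) in *. set (Q2 := pd1 g2 w) in *.
  set (N0 := (P1 * Q2 - P2 * Q1)%C). set (N1 := (P2 * Q0 - P0 * Q2)%C). set (N2 := (P0 * Q1 - P1 * Q0)%C).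
  assert (HNB : Cmod N0 + Cmod N1 + Cmod N2 <= 6 * (D1 * D1)).
  { pose proof (N_bound P1 P2 Q1 Q2 D1 BP1 BP2 BQ1 BQ2). pose proof (N_bound P2 P0 Q2 Q0 D1 BP2 BP0 BQ2 BQ0).
    pose proof (N_bound P0 P1 Q0 Q1 D1 BP0 BP1 BQ0 BQ1). unfold N0, N1, N2. lra. }
  set (NB := Cmod N0 + Cmod N1 + Cmod N2) in *.
  assert (HNB0 : 0 <= NB) by (unfold NB; pose proof (Cmod_ge_0 N0); pose proof (Cmod_ge_0 N1); pose proof (Cmod_ge_0 N2); lra).
  destruct (rep_props t Ht) as [Rt1 [Rt2 Rt3]]. destruct (rep_props s Hs) as [Rs1 [Rs2 Rs3]].
  destruct (zeta_sq t s Ht Hs) as [Z2 Zd].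
  set (t' := rep t) in *. set (s' := rep s) in *. set (Z := zeta t s) in *.
  assert (HZ0 : 0 <= Z) by (rewrite Zd; apply sqrt_pos).
  assert (Ht' : Rabs t' <= Z). { rewrite Zd. rewrite <- sqrt_Rsqr_abs. apply sqrt_le_1_alt. unfold Rsqr. nra. }
  assert (Hs' : Rabs s' <= Z). { rewrite Zd. rewrite <- sqrt_Rsqr_abs. apply sqrt_le_1_alt. unfold Rsqr. nra. }
  set (d := (RtoC (- t'), RtoC (- s'))).
  assert (Ea : aff w d (RtoC 1) = ((z0 + RtoC (t - t'))%C, (z1 + RtoC (s - s'))%C)).
  { unfold aff, w, cadd2, rpt, d. simpl. f_equal; ceq. }
  assert (Ez0 : g0 (aff w d (RtoC 1)) = g0 (z0, z1)) by (rewrite Ea; apply (per_shift gr0 g0 R0); auto).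
  assert (Ez1 : g1 (aff w d (RtoC 1)) = g1 (z0, z1)) by (rewrite Ea; apply (per_shift gr1 g1 R0); auto).
  assert (Ez2 : g2 (aff w d (RtoC 1)) = g2 (z0, z1)) by (rewrite Ea; apply (per_shift gr2 g2 R0); auto).
  assert (LHS : cdot3 (csub3 (Gam g0 g1 g2 (z0, z1)) (Gam g0 g1 g2 w)) (ccross3 (dGam0 g0 g1 g2 w) (dGam1 g0 g1 g2 w))
     = hfun g0 g1 g2 w d N0 N1 N2 (RtoC 1)).
  { unfold hfun. rewrite Ez0, Ez1, Ez2. reflexivity. }
  rewrite LHS.
  assert (H0w : forall lam, aff w d lam = w -> hfun g0 g1 g2 w d N0 N1 N2 lam = RtoC 0).
  { intros lam E. unfold hfun. rewrite E. ceq. }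
  assert (Ew0 : aff w d (RtoC 0) = w) by (unfold aff; destruct w; simpl; f_equal; ceq).
  assert (KEY : Cmod (hfun g0 g1 g2 w d N0 N1 N2 (RtoC 1)) <= 32 * G * NB * (Z * Z) / (m * m)).
  { destruct (Rle_lt_dec Z (m / 4)) as [Zs|Zl].
    - destruct (Req_dec Z 0) as [Z0|Z0].
      + assert (t' = 0) by (rewrite Z0 in Ht'; pose proof (Rabs_pos t'); unfold Rabs in Ht'; destruct (Rcase_abs t'); lra).
        assert (s' = 0) by (rewrite Z0 in Hs'; pose proof (Rabs_pos s'); unfold Rabs in Hs'; destruct (Rcase_abs s'); lra).
        rewrite H0w. rewrite Cmod_0. rewrite Z0. lra.
        unfold aff, d. destruct w; simpl. rewrite H, H0. f_equal; ceq.
      + assert (HZp : 0 < Z) by lra.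
        set (R1 := m / Z). set (r := m / (2 * Z)).
        assert (Hr : 0 < r < R1) by (unfold r, R1; split; [apply Rdiv_lt_0_compat; lra| apply Rmult_lt_reg_r with (2 * Z); [lra|]; field_simplify; lra]).
        assert (Hr2 : 2 <= r) by (unfold r; apply Rmult_le_reg_r with (2 * Z); [lra|]; field_simplify; lra).
        assert (Hol0 : Hol (hfun g0 g1 g2 w d N0 N1 N2) (RtoC 0) R1).
        { intros lam Hl. unfold inD in Hl. replace (lam - RtoC 0)%C with lam in Hl by ceq.
          assert (Il : inWcl R0 (aff w d lam)).
          { apply (aff_inWcl R0 bs w t' s' Z lam Hw0 Hw1 Ht' Hs'). fold m.
            apply Rle_trans with (Z * R1). apply Rmult_le_compat_l; lra. unfold R1. right; field; lra. }
          destruct (FD_ex gr0 g0 R0 _ E0 Il) as [L0 HL0]. destruct (FD_ex gr1 g1 R0 _ E1 Il) as [L1 HL1].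
          destruct (FD_ex gr2 g2 R0 _ E2 Il) as [L2 HL2].
          eexists. apply hfun_CD; eauto. }
        destruct (FD_ex gr0 g0 R0 _ E0 Iw) as [L0 HL0]. destruct (FD_ex gr1 g1 R0 _ E1 Iw) as [L1 HL1].
        destruct (FD_ex gr2 g2 R0 _ E2 Iw) as [L2 HL2].
        pose proof (hfun_CD0 g0 g1 g2 w d (RtoC 0) L0 L1 L2 eq_refl HL0 HL1 HL2) as HD0. simpl in HD0.
        assert (Hcirc : forall th, Cmod (hfun g0 g1 g2 w d N0 N1 N2 (gam (RtoC 0) r th)) <= 2 * G * NB).
        { intros th. 
          assert (Il : inWcl R0 (aff w d (gam (RtoC 0) r th))).
          { apply (aff_inWcl R0 bs w t' s' Z _ Hw0 Hw1 Ht' Hs'). fold m.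
            replace (Cmod (gam (RtoC 0) r th)) with r. unfold r. replace (Z * (m / (2 * Z))) with (m / 2) by (field; lra). lra.
            unfold gam. replace (RtoC 0 + RtoC r * ex th)%C with (RtoC r * ex th)%C by ceq.
            rewrite Cmod_mult, Cmod_ex, Cmod_R, Rabs_right; lra. }
          apply hfun_bound; auto. }
        destruct (est_taylor _ (RtoC 0) R1 r (2 * G * NB) (RtoC 0) (RtoC 1) Hol0 Hr Hcirc HD0) as [T _].
        { replace (RtoC 1 - RtoC 0)%C with (RtoC 1) by ceq. rewrite Cmod_1. lra. }
        rewrite (H0w (RtoC 0) Ew0) in T.
        replace (hfun g0 g1 g2 w d N0 N1 N2 (RtoC 1) - RtoC 0 - RtoC 0 * (RtoC 1 - RtoC 0))%C with (hfun g0 g1 g2 w d N0 N1 N2 (RtoC 1)) in T by ceq.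
        replace (RtoC 1 - RtoC 0)%C with (RtoC 1) in T by ceq. rewrite Cmod_1 in T.
        eapply Rle_trans. exact T. right. unfold r. field. lra.
    - assert (Bd : Cmod (hfun g0 g1 g2 w d N0 N1 N2 (RtoC 1)) <= 2 * G * NB).
      { apply hfun_bound; try rewrite Ez0; try rewrite Ez1; try rewrite Ez2; auto. }
      eapply Rle_trans. exact Bd.
      assert (1 <= 16 * (Z * Z) / (m * m)).
      { apply Rmult_le_reg_r with (m * m). nra. field_simplify. 2: lra. nra. }
      assert (0 <= 2 * G * NB) by nra.
      replace (32 * G * NB * (Z * Z) / (m * m)) with (2 * G * NB * (16 * (Z * Z) / (m * m))) by (field; lra).
      nra. }
  eapply Rle_trans. exact KEY.
  unfold c. replace (Z ^ 2) with (Z * Z) by ring.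
  assert (32 * G * NB * (Z * Z) / (m * m) <= 32 * G * (6 * (D1 * D1)) / (m * m) * (Z * Z)).
  { unfold Rdiv. replace (32 * G * NB * (Z * Z) * / (m * m)) with (32 * G * NB * / (m * m) * (Z * Z)) by ring.
    apply Rmult_le_compat_r. nra. apply Rmult_le_compat_r. apply Rlt_le, Rinv_0_lt_compat; nra.
    apply Rmult_le_compat_l; nra. }
  assert (0 <= Z * Z) by nra.
  set (X := 32 * G * (6 * (D1 * D1)) / (m * m)) in *. set (Y := 32 * G * NB * (Z * Z) / (m * m)) in *.
  set (ZZ := Z * Z) in *. nra.
Qed.
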